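(* For complex $a,c$ with $|ac|<1$, \begin{align*} \sum_{n=0}^\infty \bigl(1-q^{2n+1}\bigr) \frac{\bigl(q^2/a, q^2/c; q^2\bigr)_n}{\bigl(q^2 a, q^2c; q^2\bigr)_n} (ac)^n \sum_{j=-n}^n (-1)^j q^{n^2-j^2} =\frac{\bigl(q^2, ac; q^2\bigr)_\infty}{\bigl(q^2 a, q^2 c; q^2\bigr)_\infty}\sum_{n=0}^\infty \frac{\bigl(q^2/a, q^2/c; q^2\bigr)_n}{\bigl(1+q^{2n+1}\bigr)\bigl(q^4; q^4\bigr)_n} (-ac)^n. \end{align*}
   Context: Throughout, $q$ is a complex number with $0<|q|<1$. For $x\in\mathbb{C}$ and base $p\in\{q^2,q^4\}$, $(x;p)_\infty=\prod_{k=0}^\infty(1-xp^k)$ and, for an integer $n\ge 0$, $(x;p)_n=\prod_{k=0}^{n-1}(1-xp^k)$; also $(x_1,\dots,x_m;p)_n=(x_1;p)_n\cdots(x_m;p)_n$ for $n$ an integer or $\infty$. *)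

(* Defs.v *)
From Stdlib Require Import Reals ZArith.
From Coquelicot Require Import Coquelicot.
Open Scope C_scope.

Fixpoint qpoch (x p : C) (n : nat) : C :=
  match n with O => 1%R | S m => qpoch x p m * (1%R - x * Cpow p m) end.

Definition is_qpoch_inf (x p P : C) : Prop :=
  filterlim (fun n => qpoch x p n) eventually (locally P).

Definition inner_sum (q : C) (n : nat) : C :=
  sum_n_m (fun k : nat =>
    let j := (Z.of_nat k - Z.of_nat n)%Z in
    Cpow (Copp 1%R) (Z.abs_nat j) *
    Cpow q (Z.to_nat (Z.of_nat n * Z.of_nat n - j * j)%Z)) 0 (2 * n).

(* Main.v *)
Require Import Defs.
From Stdlib Require Import Reals ZArith Lia Lra ClassicalEpsilon.
From Coquelicot Require Import Coquelicot.
Open Scope C_scope.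

Lemma norm_C (z : C) : @norm C_AbsRing C_NormedModule z = Cmod z.
Proof. reflexivity. Qed.
Lemma minus_C (z w : C) : minus z w = z - w.
Proof. reflexivity. Qed.
Lemma plus_C (z w : C) : plus z w = z + w.
Proof. reflexivity. Qed.
Lemma scal_C (z w : C) : @scal C_AbsRing C_NormedModule z w = z * w.
Proof. reflexivity. Qed.

Definition Clim (u : nat -> C) (l : C) : Prop :=
  forall eps : R, (0 < eps)%R -> exists N, forall n, (N <= n)%nat -> (Cmod (u n - l) < eps)%R.

Lemma Clim_filterlim u l : Clim u l <-> filterlim u eventually (locally l).
Proof.
  rewrite filterlim_locally_ball_norm. split.
  - intros H eps. destruct (H eps (cond_pos eps)) as [N HN]. exists N. intros n Hn.
    unfold ball_norm. rewrite norm_C, minus_C. now apply HN.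
  - intros H eps Heps. destruct (H (mkposreal eps Heps)) as [N HN]. exists N.
    intros n Hn. specialize (HN n Hn). unfold ball_norm in HN.
    rewrite norm_C, minus_C in HN. exact HN.
Qed.

Lemma Clim_series a l : is_series a l <-> Clim (sum_n a) l.
Proof. unfold is_series. now rewrite Clim_filterlim. Qed.

Lemma Clim_unique u l1 l2 : Clim u l1 -> Clim u l2 -> l1 = l2.
Proof.
  rewrite !Clim_filterlim. intros H1 H2.
  apply (filterlim_locally_unique u l1 l2 H1 H2).
Qed.

Lemma Cmod_triangle' (a b c : C) : (Cmod (a - c) <= Cmod (a - b) + Cmod (b - c))%R.
Proof. replace (a - c) with ((a - b) + (b - c)) by ring. apply Cmod_triangle. Qed.

Lemma Clim_const l : Clim (fun _ => l) l.
Proof. intros eps He. exists 0%nat. intros. replace (l - l) with (RtoC 0) by ring. rewrite Cmod_0. lra. Qed.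

Lemma Clim_ext u v l : (forall n, u n = v n) -> Clim u l -> Clim v l.
Proof. intros E H eps He. destruct (H eps He) as [N HN]. exists N. intros. rewrite <- E. auto. Qed.

Lemma Clim_ext_ev u v l N0 : (forall n, (N0 <= n)%nat -> u n = v n) -> Clim u l -> Clim v l.
Proof. intros E H eps He. destruct (H eps He) as [N HN]. exists (N + N0)%nat. intros.
  rewrite <- E by lia. apply HN; lia. Qed.

Lemma Clim_plus u v l m : Clim u l -> Clim v m -> Clim (fun n => u n + v n) (l + m).
Proof.
  intros Hu Hv eps He.
  destruct (Hu (eps/2)%R ltac:(lra)) as [N1 H1]. destruct (Hv (eps/2)%R ltac:(lra)) as [N2 H2].
  exists (N1 + N2)%nat. intros n Hn.
  replace (u n + v n - (l + m)) with ((u n - l) + (v n - m)) by ring.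
  eapply Rle_lt_trans. apply Cmod_triangle.
  specialize (H1 n ltac:(lia)). specialize (H2 n ltac:(lia)). lra.
Qed.

Lemma Clim_opp u l : Clim u l -> Clim (fun n => - u n) (- l).
Proof. intros H eps He. destruct (H eps He) as [N HN]. exists N. intros.
  replace (- u n - - l) with (- (u n - l)) by ring. rewrite Cmod_opp. auto. Qed.

Lemma Clim_minus u v l m : Clim u l -> Clim v m -> Clim (fun n => u n - v n) (l - m).
Proof. intros. apply Clim_plus; auto. now apply Clim_opp. Qed.

Lemma Clim_bounded u l : Clim u l -> exists B, (0 < B)%R /\ forall n, (Cmod (u n) <= B)%R.
Proof.
  intros H. destruct (H 1%R ltac:(lra)) as [N HN].
  assert (Hfin : forall N, exists B, (0 < B)%R /\ forall n, (n <= N)%nat -> (Cmod (u n) <= B)%R).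
  { clear. induction N as [|N IH].
    - exists (Cmod (u 0%nat) + 1)%R. split. pose proof (Cmod_ge_0 (u 0%nat)). lra.
      intros n Hn. replace n with 0%nat by lia. lra.
    - destruct IH as [B [HB HBn]].
      exists (Rmax B (Cmod (u (S N)))). split. eapply Rlt_le_trans. apply HB. apply Rmax_l.
      intros n Hn. destruct (Nat.eq_dec n (S N)). subst. apply Rmax_r.
      eapply Rle_trans. apply HBn. lia. apply Rmax_l. }
  destruct (Hfin N) as [B [HB HBn]].
  exists (B + Cmod l + 1)%R. split. pose proof (Cmod_ge_0 l). lra.
  intros n. destruct (le_lt_dec n N).
  - pose proof (Cmod_ge_0 l). specialize (HBn n l0). lra.
  - specialize (HN n ltac:(lia)). replace (u n) with ((u n - l) + l) by ring.
    eapply Rle_trans. apply Cmod_triangle. lra.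
Qed.

Lemma Clim_mult u v l m : Clim u l -> Clim v m -> Clim (fun n => u n * v n) (l * m).
Proof.
  intros Hu Hv eps He.
  destruct (Clim_bounded u l Hu) as [B [HB HBn]].
  set (e1 := (eps / (2 * (Cmod m + 1)))%R).
  set (e2 := (eps / (2 * B))%R).
  assert (Hm : (0 <= Cmod m)%R) by apply Cmod_ge_0.
  assert (He1 : (0 < e1)%R). { unfold e1. apply Rdiv_lt_0_compat; lra. }
  assert (He2 : (0 < e2)%R). { unfold e2. apply Rdiv_lt_0_compat; lra. }
  destruct (Hu e1 He1) as [N1 H1]. destruct (Hv e2 He2) as [N2 H2].
  exists (N1 + N2)%nat. intros n Hn.
  replace (u n * v n - l * m) with (u n * (v n - m) + (u n - l) * m) by ring.
  eapply Rle_lt_trans. apply Cmod_triangle. rewrite !Cmod_mult.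
  specialize (H1 n ltac:(lia)). specialize (H2 n ltac:(lia)).
  assert (A1 : (Cmod (u n) * Cmod (v n - m) <= B * e2)%R).
  { apply Rmult_le_compat; try apply Cmod_ge_0; auto; lra. }
  assert (A2 : (Cmod (u n - l) * Cmod m <= e1 * Cmod m)%R).
  { apply Rmult_le_compat_r; auto; lra. }
  assert (A3 : (B * e2 = eps / 2)%R) by (unfold e2; field; lra).
  assert (A4 : (e1 * Cmod m < eps / 2)%R).
  { unfold e1. apply Rmult_lt_reg_r with (2 * (Cmod m + 1))%R. lra.
    field_simplify; try lra. }
  lra.
Qed.

Lemma Clim_scal c u l : Clim u l -> Clim (fun n => c * u n) (c * l).
Proof. intros. apply Clim_mult; auto. apply Clim_const. Qed.

Lemma Clim_le_bound u l c B : Clim u l -> (forall n, (Cmod (u n - c) <= B)%R) -> (Cmod (l - c) <= B)%R.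
Proof.
  intros H HB. apply Rnot_lt_le. intros Hlt.
  destruct (H (Cmod (l - c) - B)%R ltac:(lra)) as [N HN].
  specialize (HN N (le_n _)). specialize (HB N).
  pose proof (Cmod_triangle' l (u N) c). rewrite <- Cmod_opp in HN.
  replace (- (u N - l)) with (l - u N) in HN by ring. lra.
Qed.

Lemma Clim_le_bound_ev u l c B N0 : Clim u l -> (forall n, (N0 <= n)%nat -> (Cmod (u n - c) <= B)%R) -> (Cmod (l - c) <= B)%R.
Proof.
  intros H HB. apply (Clim_le_bound (fun n => u (n + N0)%nat)).
  intros eps He. destruct (H eps He) as [N HN]. exists N. intros. apply HN; lia.
  intros. apply HB; lia.
Qed.

Lemma Clim_ge_bound u l e : Clim u l -> (forall n, (e <= Cmod (u n))%R) -> (e <= Cmod l)%R.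
Proof.
  intros H HB. apply Rnot_lt_le. intros Hlt.
  destruct (H (e - Cmod l)%R ltac:(lra)) as [N HN].
  specialize (HN N (le_n _)). specialize (HB N).
  pose proof (Cmod_triangle (u N - l) l). replace (u N - l + l) with (u N) in H0 by ring. lra.
Qed.

Lemma Clim_subseq u l (phi : nat -> nat) : (forall n, (n <= phi n)%nat) -> Clim u l -> Clim (fun n => u (phi n)) l.
Proof. intros Hp H eps He. destruct (H eps He) as [N HN]. exists N. intros. apply HN. specialize (Hp n). lia. Qed.

Lemma Clim_shift_back u l r : Clim u l -> Clim (fun n => u (n - r)%nat) l.
Proof. intros H eps He. destruct (H eps He) as [N HN]. exists (N + r)%nat. intros. apply HN. lia. Qed.

Lemma Clim_geom_bound u K t : (0 <= t < 1)%R -> (forall n, (Cmod (u n) <= K * t ^ n)%R) -> Clim u 0.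
Proof.
  intros Ht HB eps He.
  destruct (Rle_lt_dec K 0).
  - exists 0%nat. intros. replace (u n - 0) with (u n) by ring. specialize (HB n).
    pose proof (pow_le t n ltac:(lra)). nra.
  - assert (Rabs t < 1)%R by (rewrite Rabs_pos_eq; lra).
    destruct (pow_lt_1_zero t H (eps / K)%R) as [N HN]. apply Rdiv_lt_0_compat; lra.
    exists N. intros n Hn. replace (u n - 0) with (u n) by ring. specialize (HN n Hn).
    rewrite Rabs_pos_eq in HN by (apply pow_le; lra).
    eapply Rle_lt_trans. apply HB. apply Rmult_lt_reg_r with (/K)%R. apply Rinv_0_lt_compat; lra.
    replace (K * t ^ n * / K)%R with (t ^ n)%R by (field; lra). exact HN.
Qed.

Lemma Clim_inv_lb u l c : (0 < c)%R -> (forall n, (c <= Cmod (u n))%R) -> Clim u l -> Clim (fun n => / u n) (/ l).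
Proof.
  intros Hc Hb H.
  assert (Hl : (c <= Cmod l)%R) by (eapply Clim_ge_bound; eauto).
  intros eps He. destruct (H (eps * (c * c))%R ltac:(apply Rmult_lt_0_compat; [lra| apply Rmult_lt_0_compat; lra])) as [N HN]. exists N. intros n Hn.
  assert (un0 : u n <> 0). { intro E. specialize (Hb n). rewrite E, Cmod_0 in Hb. lra. }
  assert (l0 : l <> 0). { intro E. rewrite E, Cmod_0 in Hl. lra. }
  replace (/ u n - / l) with ((l - u n) / (u n * l)) by (field; auto).
  unfold Cdiv. rewrite Cmod_mult, Cmod_inv, Cmod_mult by (apply Cmult_neq_0; auto).
  specialize (HN n Hn). rewrite <- Cmod_opp in HN. replace (- (u n - l)) with (l - u n) in HN by ring.
  specialize (Hb n).
  assert (0 < Cmod (u n) * Cmod l)%R by nra.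
  apply Rmult_lt_reg_r with (Cmod (u n) * Cmod l)%R; auto.
  rewrite Rmult_assoc, Rinv_l by lra. rewrite Rmult_1_r.
  eapply Rlt_le_trans. apply HN. apply Rmult_le_compat_l. lra. nra.
Qed.


Lemma Cmod_rev_tri (z : C) : (1 - Cmod z <= Cmod (1 - z))%R.
Proof. pose proof (Cmod_triangle (1 - z) z). replace (1 - z + z) with (RtoC 1) in H by ring.
  rewrite Cmod_1 in H. lra. Qed.

Lemma Cmod_1_minus_le (z : C) : (Cmod (1 - z) <= 1 + Cmod z)%R.
Proof. eapply Rle_trans. apply Cmod_triangle. rewrite Cmod_opp, Cmod_1. lra. Qed.

Lemma qp_S x p n : qpoch x p (S n) = qpoch x p n * (1 - x * Cpow p n).
Proof. reflexivity. Qed.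

Lemma qp_0 x p : qpoch x p 0 = 1.
Proof. reflexivity. Qed.

Lemma qp_shift x p n : qpoch x p (S n) = (1 - x) * qpoch (x * p) p n.
Proof.
  induction n as [|n IH].
  - simpl. ring.
  - rewrite qp_S, IH, qp_S. simpl. ring.
Qed.

Lemma qp_add x p n m : qpoch x p (n + m) = qpoch x p n * qpoch (x * Cpow p n) p m.
Proof.
  induction m as [|m IH].
  - rewrite Nat.add_0_r. simpl. ring.
  - rewrite Nat.add_succ_r, !qp_S, IH, Cpow_add_r. ring.
Qed.

Lemma Cmod_xp x p n : Cmod (x * Cpow p n) = (Cmod x * Cmod p ^ n)%R.
Proof. rewrite Cmod_mult, Cmod_pow. reflexivity. Qed.

Lemma qp_ub_aux x p n : (Cmod p < 1)%R ->
  (Cmod (qpoch x p n) <= exp (Cmod x * (1 - Cmod p ^ n) / (1 - Cmod p)))%R.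
Proof.
  intros Hp. pose proof (Cmod_ge_0 p) as Hp0. pose proof (Cmod_ge_0 x) as Hx0.
  induction n as [|n IH].
  - simpl. rewrite Cmod_1. replace (Cmod x * (1 - 1) / (1 - Cmod p))%R with 0%R by (field; lra).
    rewrite exp_0. lra.
  - rewrite qp_S, Cmod_mult.
    replace (Cmod x * (1 - Cmod p ^ S n) / (1 - Cmod p))%R with
      (Cmod x * (1 - Cmod p ^ n) / (1 - Cmod p) + Cmod x * Cmod p ^ n)%R by (simpl; field; lra).
    rewrite exp_plus. apply Rmult_le_compat; try apply Cmod_ge_0; auto.
    eapply Rle_trans. apply Cmod_1_minus_le. rewrite Cmod_xp.
    pose proof (exp_ineq1_le (Cmod x * Cmod p ^ n)). lra.
Qed.

Lemma exp_le' x y : (x <= y)%R -> (exp x <= exp y)%R.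
Proof. intros [H|H]. left. now apply exp_increasing. subst. lra. Qed.

Lemma qp_ub x p n : (Cmod p < 1)%R -> (Cmod (qpoch x p n) <= exp (Cmod x / (1 - Cmod p)))%R.
Proof.
  intros Hp. eapply Rle_trans. apply qp_ub_aux; auto.
  pose proof (Cmod_ge_0 p) as Hp0. pose proof (Cmod_ge_0 x) as Hx0.
  apply exp_le'. unfold Rdiv. apply Rmult_le_compat_r. apply Rlt_le, Rinv_0_lt_compat; lra.
  pose proof (pow_le (Cmod p) n Hp0). nra.
Qed.

Lemma one_minus_exp y : (0 <= y < 1)%R -> (exp (- (y / (1 - y))) <= 1 - y)%R.
Proof.
  intros Hy. rewrite exp_Ropp. pose proof (exp_ineq1_le (y / (1 - y))).
  pose proof (exp_pos (y / (1 - y))).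
  apply Rmult_le_reg_r with (exp (y / (1 - y))). lra.
  rewrite Rinv_l by lra.
  apply Rle_trans with ((1 - y) * (1 + y / (1 - y)))%R.
  right. field. lra. apply Rmult_le_compat_l; lra.
Qed.

Lemma pow_le1 x n : (0 <= x <= 1)%R -> (x ^ n <= 1)%R.
Proof. intros H. induction n; simpl. lra. pose proof (pow_le x n ltac:(lra)). nra. Qed.

Lemma qp_lb_aux x p n : (Cmod p < 1)%R -> (Cmod x < 1)%R ->
  (exp (- (Cmod x * (1 - Cmod p ^ n) / ((1 - Cmod x) * (1 - Cmod p)))) <= Cmod (qpoch x p n))%R.
Proof.
  intros Hp Hx. pose proof (Cmod_ge_0 p) as Hp0. pose proof (Cmod_ge_0 x) as Hx0.
  induction n as [|n IH].
  - simpl. rewrite Cmod_1. replace (- (Cmod x * (1 - 1) / ((1 - Cmod x) * (1 - Cmod p))))%R with 0%R by (field; lra).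
    rewrite exp_0. lra.
  - rewrite qp_S, Cmod_mult.
    set (y := (Cmod x * Cmod p ^ n)%R).
    assert (Hpn : (0 <= Cmod p ^ n <= 1)%R) by (split; [apply pow_le | apply pow_le1]; lra).
    assert (Hy0 : (0 <= y)%R) by (unfold y; nra).
    assert (Hyx : (y <= Cmod x)%R) by (unfold y; nra).
    replace (- (Cmod x * (1 - Cmod p ^ S n) / ((1 - Cmod x) * (1 - Cmod p))))%R with
      (- (Cmod x * (1 - Cmod p ^ n) / ((1 - Cmod x) * (1 - Cmod p))) + - (y / (1 - Cmod x)))%R
      by (unfold y; simpl; field; lra).
    rewrite exp_plus. apply Rmult_le_compat; try (left; apply exp_pos); auto.
    apply Rle_trans with (1 - y)%R.
    + eapply Rle_trans. 2: apply one_minus_exp; lra.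
      apply exp_le'. apply Ropp_le_contravar. unfold Rdiv.
      apply Rmult_le_compat_l; auto. apply Rinv_le_contravar; lra.
    + unfold y. rewrite <- Cmod_xp. apply Cmod_rev_tri.
Qed.

Lemma qp_lb_small x p n : (Cmod p < 1)%R -> (Cmod x < 1)%R ->
  (exp (- (Cmod x / ((1 - Cmod x) * (1 - Cmod p)))) <= Cmod (qpoch x p n))%R.
Proof.
  intros Hp Hx. eapply Rle_trans. 2: apply qp_lb_aux; auto.
  pose proof (Cmod_ge_0 p) as Hp0. pose proof (Cmod_ge_0 x) as Hx0.
  apply exp_le'. apply Ropp_le_contravar. unfold Rdiv. apply Rmult_le_compat_r.
  apply Rlt_le, Rinv_0_lt_compat. apply Rmult_lt_0_compat; lra.
  assert (Hpn : (0 <= Cmod p ^ n)%R) by (apply pow_le; lra). nra.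
Qed.

Lemma qp_nz x p n : (forall k, x * Cpow p k <> 1) -> qpoch x p n <> 0.
Proof.
  intros H. induction n as [|n IH].
  - simpl. intro E. apply C1_nz. exact E.
  - rewrite qp_S. apply Cmult_neq_0; auto. intro E. apply (H n).
    replace (x * Cpow p n) with (1 - (1 - x * Cpow p n)) by ring. rewrite E. ring.
Qed.

Lemma Cmod_pos_of_nz (z : C) : z <> 0 -> (0 < Cmod z)%R.
Proof. intros H. pose proof (Cmod_ge_0 z). destruct (Rle_lt_or_eq_dec _ _ H0); auto.
  exfalso. apply H. apply Cmod_eq_0. auto. Qed.

Lemma qp_lb x p : (Cmod p < 1)%R -> (forall k, x * Cpow p k <> 1) ->
  exists e, (0 < e)%R /\ forall n, (e <= Cmod (qpoch x p n))%R.
Proof.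
  intros Hp Hk. pose proof (Cmod_ge_0 p) as Hp0.
  assert (Hs : Rabs (Cmod p) < 1) by (rewrite Rabs_pos_eq; lra).
  destruct (pow_lt_1_zero (Cmod p) Hs (/ (2 * (Cmod x + 1)))%R) as [K HK].
  { apply Rinv_0_lt_compat. pose proof (Cmod_ge_0 x). lra. }
  specialize (HK K (le_n _)). rewrite Rabs_pos_eq in HK by (apply pow_le; lra).
  set (y := x * Cpow p K).
  assert (Hy : (Cmod y <= 1/2)%R).
  { unfold y. rewrite Cmod_xp. pose proof (Cmod_ge_0 x).
    apply Rle_trans with (Cmod x * / (2 * (Cmod x + 1)))%R.
    apply Rmult_le_compat_l; lra.
    apply Rmult_le_reg_r with (2 * (Cmod x + 1))%R. lra.
    rewrite Rmult_assoc, Rinv_l by lra. nra. }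
  set (c := exp (- (Cmod y / ((1 - Cmod y) * (1 - Cmod p))))).
  assert (Hfin : forall N, exists e, (0 < e)%R /\ forall n, (n <= N)%nat -> (e <= Cmod (qpoch x p n))%R).
  { induction N as [|N IH].
    - exists 1%R. split. lra. intros n Hn. replace n with 0%nat by lia. simpl. rewrite Cmod_1. lra.
    - destruct IH as [e [He Hen]].
      exists (Rmin e (Cmod (qpoch x p (S N)))). split.
      apply Rmin_pos; auto. apply Cmod_pos_of_nz, qp_nz; auto.
      intros n Hn. destruct (Nat.eq_dec n (S N)). subst. apply Rmin_r.
      eapply Rle_trans. apply Rmin_l. apply Hen. lia. }
  destruct (Hfin K) as [e [He Hen]].
  exists (Rmin e (Cmod (qpoch x p K) * c)). split.
  { apply Rmin_pos; auto. apply Rmult_lt_0_compat. apply Cmod_pos_of_nz, qp_nz; auto. apply exp_pos. }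
  intros n. destruct (le_lt_dec n K).
  - eapply Rle_trans. apply Rmin_l. auto.
  - eapply Rle_trans. apply Rmin_r. replace n with (K + (n - K))%nat by lia.
    rewrite qp_add, Cmod_mult. apply Rmult_le_compat_l. apply Cmod_ge_0.
    unfold c. apply qp_lb_small; auto. fold y. lra.
Qed.


Fixpoint cs (f : nat -> C) (n : nat) : C :=
  match n with O => f O | S k => cs f k + f (S k) end.

Lemma cs_sum_n f n : sum_n f n = cs f n.
Proof. induction n as [|n IH]. - rewrite sum_O. reflexivity. - rewrite sum_Sn, IH. reflexivity. Qed.

Lemma is_series_cs (a : nat -> C) (l : C) : is_series a l <-> Clim (cs a) l.
Proof. rewrite Clim_series. split; apply Clim_ext; intros; now rewrite cs_sum_n. Qed.

Lemma cs_ext f g n : (forall k, (k <= n)%nat -> f k = g k) -> cs f n = cs g n.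
Proof. induction n; simpl; intros H. apply H; lia. rewrite IHn, H; auto. Qed.

Lemma cs_plus f g n : cs (fun k => f k + g k) n = cs f n + cs g n.
Proof. induction n; simpl. auto. rewrite IHn. ring. Qed.

Lemma cs_scal c f n : cs (fun k => c * f k) n = c * cs f n.
Proof. induction n; simpl. auto. rewrite IHn. ring. Qed.

Lemma cs_shift f n : cs f (S n) = f O + cs (fun k => f (S k)) n.
Proof. induction n; simpl in *. ring. rewrite IHn. ring. Qed.

Lemma cs_zero n : cs (fun _ => 0) n = 0.
Proof. induction n; simpl; auto. rewrite IHn. ring. Qed.

Lemma cs_Cmod f n K r : (0 <= r)%R -> (forall k, (Cmod (f k) <= K * r ^ k)%R) ->
  (Cmod (cs f (S n) - f O) <= K * r * (1 - r ^ n) / (1 - r))%R -> True.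
Proof. auto. Qed.

Lemma cs_tail_bound f n d K r : (0 <= r < 1)%R -> (forall k, (Cmod (f k) <= K * r ^ k)%R) ->
  (Cmod (cs f (n + d) - cs f n) <= K * r ^ (S n) * (1 - r ^ d) / (1 - r))%R.
Proof.
  intros Hr Hf. induction d as [|d IH].
  - rewrite Nat.add_0_r. replace (cs f n - cs f n) with (RtoC 0) by ring. rewrite Cmod_0.
    simpl. right. field. lra.
  - rewrite Nat.add_succ_r. simpl cs.
    replace (cs f (n + d) + f (S (n + d)) - cs f n) with ((cs f (n + d) - cs f n) + f (S (n + d))) by ring.
    eapply Rle_trans. apply Cmod_triangle. eapply Rle_trans. apply Rplus_le_compat. apply IH. apply Hf.
    right. rewrite <- !tech_pow_Rmult, pow_add. simpl. field. lra.
Qed.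

Lemma series_tail_bound a l n K r : (0 <= r < 1)%R -> (forall k, (Cmod (a k) <= K * r ^ k)%R) ->
  is_series a l -> (Cmod (l - cs a n) <= K * r ^ (S n) / (1 - r))%R.
Proof.
  intros Hr Ha Hl. rewrite is_series_cs in Hl.
  apply (Clim_le_bound_ev (cs a) l (cs a n) _ n Hl).
  intros m Hm. replace m with (n + (m - n))%nat by lia.
  eapply Rle_trans. apply cs_tail_bound; [exact Hr | exact Ha].
  assert (0 <= K)%R. { pose proof (Ha O). pose proof (Cmod_ge_0 (a O)). simpl in H. lra. }
  unfold Rdiv. apply Rmult_le_compat_r. apply Rlt_le, Rinv_0_lt_compat; lra.
  pose proof (pow_le r (m - n) ltac:(lra)). pose proof (pow_le r (S n) ltac:(lra)).
  rewrite Rmult_assoc. apply Rmult_le_compat_l; auto. nra.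
Qed.

Lemma ex_series_geom_C (a : nat -> C) K r : (0 <= r < 1)%R -> (forall k, (Cmod (a k) <= K * r ^ k)%R) ->
  exists l : C, is_series a l.
Proof.
  intros Hr Ha. assert (ex_series a) as [l Hl]; [|exists l; exact Hl].
  apply (ex_series_le a (fun k => K * r ^ k)%R).
  - intros n. rewrite norm_C. apply Ha.
  - apply (ex_series_scal_l K (fun k => r ^ k)%R). apply ex_series_geom. rewrite Rabs_pos_eq; lra.
Qed.

Lemma Clim_cs (f : nat -> nat -> C) (g : nat -> C) n :
  (forall k, Clim (fun N => f N k) (g k)) -> Clim (fun N => cs (f N) n) (cs g n).
Proof.
  intros H. induction n as [|n IH]; simpl. apply H. apply Clim_plus; auto.
Qed.

Lemma dct (f : nat -> nat -> C) (F : nat -> C) (g : nat -> C) (G : C) K r :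
  (0 <= r < 1)%R -> (forall N k, (Cmod (f N k) <= K * r ^ k)%R) ->
  (forall N, is_series (f N) (F N)) -> (forall k, Clim (fun N => f N k) (g k)) ->
  is_series g G -> Clim F G.
Proof.
  intros Hr Hb HF Hg HG eps He.
  assert (HK : (0 <= K)%R). { pose proof (Hb O O). pose proof (Cmod_ge_0 (f O O)). simpl in H. lra. }
  assert (Hgb : forall k, (Cmod (g k) <= K * r ^ k)%R).
  { intros k. replace (g k) with (g k - 0) by ring. apply (Clim_le_bound _ _ _ _ (Hg k)).
    intros N. replace (f N k - 0) with (f N k) by ring. apply Hb. }
  assert (Rabs r < 1)%R by (rewrite Rabs_pos_eq; lra).
  destruct (pow_lt_1_zero r H (eps * (1 - r) / (3 * (K + 1)))%R) as [K0 HK0].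
  { apply Rdiv_lt_0_compat. apply Rmult_lt_0_compat; lra. lra. }
  specialize (HK0 (S K0) ltac:(lia)). rewrite Rabs_pos_eq in HK0 by (apply pow_le; lra).
  assert (Htail : (K * r ^ S K0 / (1 - r) < eps / 3)%R).
  { apply Rmult_lt_reg_r with ((1 - r) * (K + 1))%R. nra.
    replace (K * r ^ S K0 / (1 - r) * ((1 - r) * (K + 1)))%R with (K * r ^ S K0 * (K + 1))%R by (field; lra).
    apply Rle_lt_trans with ((K + 1) * r ^ S K0 * (K + 1))%R.
    pose proof (pow_le r (S K0) ltac:(lra)). nra.
    replace (eps / 3 * ((1 - r) * (K + 1)))%R with ((K+1) * (eps * (1 - r) / (3 * (K + 1))) * (K + 1))%R by (field; lra).
    apply Rmult_lt_compat_r. lra. apply Rmult_lt_compat_l; lra. }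
  destruct (Clim_cs f g K0 Hg (eps / 3)%R ltac:(lra)) as [N1 HN1].
  exists N1. intros N HN.
  pose proof (series_tail_bound (f N) (F N) K0 K r Hr (Hb N) (HF N)) as T1.
  pose proof (series_tail_bound g G K0 K r Hr Hgb HG) as T2.
  specialize (HN1 N HN).
  replace (F N - G) with ((F N - cs (f N) K0) + (cs (f N) K0 - cs g K0) - (G - cs g K0)) by ring.
  eapply Rle_lt_trans. apply Cmod_triangle. rewrite Cmod_opp.
  eapply Rle_lt_trans. apply Rplus_le_compat_r. apply Cmod_triangle. lra.
Qed.

Lemma is_series_finite (a : nat -> C) N : (forall k, (N < k)%nat -> a k = 0) -> is_series a (cs a N).
Proof.
  intros H. rewrite is_series_cs. apply Clim_ext_ev with (N0 := N) (u := fun _ => cs a N).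
  2: apply Clim_const.
  intros n Hn. replace n with (N + (n - N))%nat by lia. generalize (n - N)%nat. intros d.
  induction d. now rewrite Nat.add_0_r. rewrite Nat.add_succ_r. simpl. rewrite <- IHd, H by lia. ring.
Qed.

Lemma is_series_unique_C (a : nat -> C) (l1 l2 : C) : is_series a l1 -> is_series a l2 -> l1 = l2.
Proof. rewrite !is_series_cs. apply Clim_unique. Qed.

Lemma is_series_scal_C (c : C) (a : nat -> C) (l : C) : is_series a l -> is_series (fun n => c * a n) (c * l).
Proof. rewrite !is_series_cs. intros H. eapply Clim_ext. intros. symmetry. apply cs_scal. now apply Clim_scal. Qed.

Lemma is_series_plus_C (a b : nat -> C) (la lb : C) : is_series a la -> is_series b lb -> is_series (fun n => a n + b n) (la + lb).
Proof. rewrite !is_series_cs. intros H1 H2. eapply Clim_ext. intros. symmetry. apply cs_plus. now apply Clim_plus. Qed.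

Lemma is_series_ext_C (a b : nat -> C) (l : C) : (forall n, a n = b n) -> is_series a l -> is_series b l.
Proof. rewrite !is_series_cs. intros E H. eapply Clim_ext. 2: exact H. intros. apply cs_ext. auto. Qed.

Lemma is_series_shift_C (a : nat -> C) (l : C) : is_series (fun k => a (S k)) l -> is_series a (a O + l).
Proof. rewrite !is_series_cs. intros H. apply Clim_ext_ev with (N0 := 1%nat) (u := fun n => a O + cs (fun k => a (S k)) (n - 1)).
  intros n Hn. replace n with (S (n - 1)) at 2 by lia. rewrite cs_shift. auto.
  apply Clim_plus. apply Clim_const. apply Clim_shift_back. auto. Qed.

Lemma qp_conv x p : (Cmod p < 1)%R -> exists P, Clim (qpoch x p) P.
Proof.
  intros Hp. pose proof (Cmod_ge_0 p) as Hp0.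
  set (B := exp (Cmod x / (1 - Cmod p))).
  destruct (ex_series_geom_C (fun k => - (x * Cpow p k) * qpoch x p k) (Cmod x * B) (Cmod p)) as [L HL].
  { lra. }
  { intros k. rewrite Cmod_mult, Cmod_opp, Cmod_xp. pose proof (qp_ub x p k Hp).
    fold B in H. pose proof (Cmod_ge_0 x). pose proof (pow_le (Cmod p) k Hp0).
    replace (Cmod x * B * Cmod p ^ k)%R with (Cmod x * Cmod p ^ k * B)%R by ring.
    apply Rmult_le_compat_l; auto. apply Rmult_le_pos; auto. }
  exists (1 + L). rewrite is_series_cs in HL.
  apply Clim_ext_ev with (N0 := 1%nat) (u := fun n => 1 + cs (fun k => - (x * Cpow p k) * qpoch x p k) (n - 1)).
  - intros n Hn. replace n with (S (n - 1)) at 2 by lia. generalize (n - 1)%nat. intros m.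
    induction m. simpl. ring. cbn [cs]. rewrite Cplus_assoc, IHm. rewrite (qp_S x p (S m)). ring.
  - apply Clim_plus. apply Clim_const. now apply Clim_shift_back.
Qed.

Lemma qp_lim_param (y : nat -> C) p k : Clim y 0 -> Clim (fun r => qpoch (y r) p k) 1.
Proof.
  intros Hy. induction k as [|k IH].
  - apply Clim_ext with (fun _ => 1). intros; reflexivity. apply Clim_const.
  - replace (RtoC 1) with (1 * (1 - 0 * Cpow p k)) by ring.
    apply Clim_ext with (fun r => qpoch (y r) p k * (1 - y r * Cpow p k)). intros; reflexivity.
    apply Clim_mult; auto. apply Clim_minus. apply Clim_const.
    apply Clim_ext with (fun r => y r * Cpow p k). intros; reflexivity.
    apply Clim_mult; auto. apply Clim_const.
Qed.


Definition cpc (p : C) : R := exp (- (Cmod p / ((1 - Cmod p) * (1 - Cmod p)))).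

Lemma cpc_pos p : (0 < cpc p)%R.
Proof. apply exp_pos. Qed.

Lemma pp_lb p k : (Cmod p < 1)%R -> (cpc p <= Cmod (qpoch p p k))%R.
Proof. intros. apply qp_lb_small; auto. Qed.

Lemma pp_nz p k : (Cmod p < 1)%R -> qpoch p p k <> 0.
Proof. intros H E. pose proof (pp_lb p k H). rewrite E, Cmod_0 in H0. pose proof (cpc_pos p). lra. Qed.

Lemma one_minus_pow_nz p k : (Cmod p < 1)%R -> 1 - Cpow p (S k) <> 0.
Proof.
  intros H E. assert (Cpow p (S k) = 1) by (replace (Cpow p (S k)) with (1 - (1 - Cpow p (S k))) by ring; rewrite E; ring).
  apply (f_equal Cmod) in H0. rewrite Cmod_pow, Cmod_1 in H0.
  pose proof (Cmod_ge_0 p). pose proof (pow_lt_1_compat (Cmod p) (S k) ltac:(lra) ltac:(lia)). lra.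
Qed.

Definition eterm (p y : C) (k : nat) : C := Cpow y k / qpoch p p k.

Lemma Cmod_div_le (a b : C) (A c : R) : (0 < c)%R -> (Cmod a <= A)%R -> (c <= Cmod b)%R -> (Cmod (a / b) <= A / c)%R.
Proof.
  intros Hc Ha Hb. assert (b <> 0). { intro E. rewrite E, Cmod_0 in Hb. lra. }
  unfold Cdiv. rewrite Cmod_mult, Cmod_inv by auto. unfold Rdiv.
  apply Rmult_le_compat; auto. apply Cmod_ge_0. left. apply Rinv_0_lt_compat. lra.
  apply Rinv_le_contravar; auto.
Qed.

Lemma eterm_bound p y k : (Cmod p < 1)%R -> (Cmod (eterm p y k) <= / cpc p * Cmod y ^ k)%R.
Proof.
  intros Hp. unfold eterm. rewrite Rmult_comm. apply Cmod_div_le. apply cpc_pos.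
  rewrite Cmod_pow. lra. apply pp_lb; auto.
Qed.

Lemma eterm_ex p y : (Cmod p < 1)%R -> (Cmod y < 1)%R -> exists E : C, is_series (eterm p y) E.
Proof. intros. apply (ex_series_geom_C _ (/ cpc p) (Cmod y)). split. apply Cmod_ge_0. auto.
  intros. apply eterm_bound; auto. Qed.

Lemma euler_fe p y (Ey Epy : C) : (Cmod p < 1)%R -> is_series (eterm p y) Ey -> is_series (eterm p (p * y)) Epy ->
  Ey * (1 - y) = Epy.
Proof.
  intros Hp H1 H2.
  assert (H3 : is_series (fun k => eterm p y k + (-1) * eterm p (p * y) k) (Ey + (-1) * Epy)).
  { apply is_series_plus_C; auto. apply is_series_scal_C; auto. }
  assert (H4 : is_series (fun k => eterm p y k + (-1) * eterm p (p * y) k) ((eterm p y 0%nat + -1 * eterm p (p * y) 0%nat) + y * Ey)).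
  { apply is_series_shift_C. apply is_series_ext_C with (fun j => y * eterm p y j).
    - intros j. unfold eterm. rewrite !qp_S. rewrite Cpow_mult_l. simpl Cpow.
      pose proof (pp_nz p j Hp). pose proof (one_minus_pow_nz p j Hp). simpl Cpow in H0.
      field. split; auto.
    - now apply is_series_scal_C. }
  pose proof (is_series_unique_C _ _ _ H3 H4).
  replace (eterm p y 0%nat + -1 * eterm p (p * y) 0%nat) with (RtoC 0) in H by (unfold eterm; simpl; field).
  replace Epy with (Ey - (Ey + -1 * Epy)) by ring. rewrite H. ring.
Qed.

Lemma euler p x (Ex P : C) : (Cmod p < 1)%R -> (Cmod x < 1)%R ->
  is_series (eterm p x) Ex -> Clim (qpoch x p) P -> Ex * P = 1.
Proof.
  intros Hp Hx HE HP.
  pose proof (Cmod_ge_0 p) as Hp0.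
  assert (Hm : forall m, is_series (eterm p (Cpow p m * x)) (Ex * qpoch x p m)).
  { induction m as [|m IH].
    - simpl. apply is_series_ext_C with (eterm p x). intros; f_equal; ring.
      replace (Ex * 1) with Ex by ring. auto.
    - assert (Hy : (Cmod (Cpow p (S m) * x) < 1)%R).
      { rewrite Cmod_mult, Cmod_pow. pose proof (Cmod_ge_0 x).
        pose proof (pow_le1 (Cmod p) (S m) ltac:(lra)). pose proof (pow_le (Cmod p) (S m) Hp0). nra. }
      destruct (eterm_ex p (Cpow p (S m) * x) Hp Hy) as [E' HE'].
      assert (E1 : Cpow p (S m) * x = p * (Cpow p m * x)) by (simpl; ring).
      rewrite E1 in HE'. pose proof (euler_fe p _ _ _ Hp IH HE') as Hfe.
      rewrite E1. rewrite qp_S. replace (Ex * (qpoch x p m * (1 - x * Cpow p m))) with E'.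
      exact HE'. rewrite <- Hfe. ring. }
  assert (Hlim : Clim (fun m => Ex * qpoch x p m) 1).
  { apply (dct (fun m => eterm p (Cpow p m * x)) (fun m => Ex * qpoch x p m) (fun k => match k with O => 1 | S _ => 0 end) 1
             (/ cpc p) (Cmod x)).
    - split. apply Cmod_ge_0. auto.
    - intros N k. eapply Rle_trans. apply eterm_bound; auto.
      apply Rmult_le_compat_l. left. apply Rinv_0_lt_compat, cpc_pos.
      apply pow_incr. split. apply Cmod_ge_0. rewrite Cmod_mult, Cmod_pow.
      pose proof (Cmod_ge_0 x). pose proof (pow_le1 (Cmod p) N ltac:(lra)). pose proof (pow_le (Cmod p) N Hp0). nra.
    - exact Hm.
    - intros [|k].
      + apply Clim_ext with (fun _ => 1). intros; unfold eterm; simpl. field. apply Clim_const.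
      + apply (Clim_geom_bound _ (/ cpc p) (Cmod p)). lra.
        intros N. replace (eterm p (Cpow p N * x) (S k) - 0) with (eterm p (Cpow p N * x) (S k)) by ring.
        unfold eterm. rewrite Rmult_comm. apply Cmod_div_le. apply cpc_pos. 2: apply pp_lb; auto.
        rewrite Cmod_pow, Cmod_mult, Cmod_pow. simpl.
        pose proof (Cmod_ge_0 x). pose proof (pow_le1 (Cmod p) N ltac:(lra)). pose proof (pow_le (Cmod p) N Hp0).
        assert (0 <= Cmod p ^ N * Cmod x <= 1)%R by nra.
        pose proof (pow_le1 (Cmod p ^ N * Cmod x) k H2). pose proof (pow_le (Cmod p ^ N * Cmod x) k ltac:(nra)).
        assert (Cmod p ^ N * Cmod x <= Cmod p ^ N)%R by nra. nra.
    - replace (RtoC 1) with (cs (fun k => match k with O => 1 | S _ => 0 end) 0) by reflexivity.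
      apply is_series_finite. intros [|k] Hk. lia. reflexivity. }
  apply (Clim_unique (fun m => Ex * qpoch x p m)). apply Clim_scal; auto. auto.
Qed.


Definition dterm (p x u v w : C) (k : nat) : C :=
  qpoch u p k * qpoch v p k * Cpow x k / (qpoch p p k * qpoch w p k).

Definition Gc (p x u v w : C) (k : nat) : C :=
  match k with
  | O => 0
  | S j => qpoch (u*p) p j * qpoch (v*p) p j * Cpow x (S j) * ((1-w)*(1-w*p)) *
           ((u*v + w - u - v) + u*v*(1-w)*Cpow p (S j)) / (qpoch p p j * qpoch w p (S (S j)))
  end.

Lemma nz_of_ne1 (z : C) : z <> 1 -> 1 - z <> 0.
Proof. intros H E. apply H. replace z with (1 - (1 - z)) by ring. rewrite E. ring. Qed.

Lemma contig_term p x u v w k :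
  (Cmod p < 1)%R -> x * u * v = w -> (forall k, w * Cpow p k <> 1) ->
  (1 - w) * (1 - w * p) * dterm p x u v w k + - ((1 - x * v) * (1 - x * u)) * dterm p x (u*p) (v*p) (w*p*p) k
  = Gc p x u v w k - Gc p x u v w (S k).
Proof.
  intros Hp Hw Hk.
  assert (Hw0 : 1 - w <> 0) by (apply nz_of_ne1; specialize (Hk 0%nat); simpl in Hk; now rewrite Cmult_1_r in Hk).
  assert (Hw1 : 1 - w * p <> 0) by (apply nz_of_ne1; specialize (Hk 1%nat); simpl in Hk; now rewrite Cmult_1_r in Hk).
  assert (Hwpp : forall j, (1 - w) * (1 - w * p) * qpoch (w * p * p) p j = qpoch w p (S (S j))).
  { intros j. rewrite (qp_shift w), (qp_shift (w * p)). ring. }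
  destruct k as [|j].
  - unfold dterm, Gc. simpl. rewrite <- Hw. field. split; rewrite Hw; auto.
  - unfold dterm, Gc.
    pose proof (pp_nz p j Hp) as HP.
    pose proof (qp_nz w p j Hk) as HW.
    pose proof (one_minus_pow_nz p j Hp) as Hp1.
    assert (Hwj : forall i, 1 - w * Cpow p i <> 0) by (intros; apply nz_of_ne1; auto).
    pose proof (Hwj j) as Hw2. pose proof (Hwj (S j)) as Hw3. pose proof (Hwj (S (S j))) as Hw4.
    assert (E1 : qpoch (w * p * p) p (S j) = qpoch w p (S (S (S j))) / ((1 - w) * (1 - w * p))).
    { rewrite <- Hwpp. field. auto. }
    rewrite E1. rewrite (qp_shift u p j), (qp_shift v p j).
    rewrite !(qp_S _ p (S (S j))), !(qp_S _ p (S j)).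
    rewrite !(qp_S _ p j).
    rewrite !Cpow_S in *.
    rewrite <- Hw in *.
    field. repeat split; auto.
Qed.

Lemma cs_telescope (G : nat -> C) n : cs (fun k => G k - G (S k)) n = G O - G (S n).
Proof. induction n; simpl. ring. rewrite IHn. ring. Qed.

Lemma Cmod_pow_le1 (p : C) j : (Cmod p < 1)%R -> (Cmod (Cpow p j) <= 1)%R.
Proof. intros. rewrite Cmod_pow. apply pow_le1. split. apply Cmod_ge_0. lra. Qed.

Lemma Gc_bound p x u v w : (Cmod p < 1)%R -> (Cmod x < 1)%R -> (forall k, w * Cpow p k <> 1) ->
  exists K, forall j, (Cmod (Gc p x u v w (S j)) <= K * Cmod x ^ j)%R.
Proof.
  intros Hp Hx Hk.
  destruct (qp_lb w p Hp Hk) as [cw [Hcw Hcwn]].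
  set (Bu := exp (Cmod (u * p) / (1 - Cmod p))).
  set (Bv := exp (Cmod (v * p) / (1 - Cmod p))).
  set (M1 := Cmod ((1 - w) * (1 - w * p))).
  set (M2 := (Cmod (u * v + w - u - v) + Cmod (u * v * (1 - w)))%R).
  exists (Bu * Bv * M1 * M2 / (cpc p * cw))%R. intros j. unfold Gc.
  replace (Bu * Bv * M1 * M2 / (cpc p * cw) * Cmod x ^ j)%R with ((Bu * Bv * Cmod x ^ j * M1 * M2) / (cpc p * cw))%R
    by (field; split; [lra | pose proof (cpc_pos p); lra]).
  pose proof (cpc_pos p). pose proof (Cmod_ge_0 x).
  apply Cmod_div_le. apply Rmult_lt_0_compat; lra.
  - rewrite !Cmod_mult. 
    assert (A1 : (Cmod (qpoch (u * p) p j) <= Bu)%R) by (apply qp_ub; auto).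
    assert (A2 : (Cmod (qpoch (v * p) p j) <= Bv)%R) by (apply qp_ub; auto).
    assert (A3 : (Cmod (Cpow x (S j)) <= Cmod x ^ j)%R).
    { rewrite Cmod_pow. simpl. pose proof (pow_le (Cmod x) j H0). nra. }
    assert (A4 : (Cmod (u * v + w - u - v + u * v * (1 - w) * Cpow p (S j)) <= M2)%R).
    { eapply Rle_trans. apply Cmod_triangle. rewrite (Cmod_mult (u * v * (1 - w))).
      pose proof (Cmod_pow_le1 p (S j) Hp). pose proof (Cmod_ge_0 (u * v * (1 - w))). unfold M2. nra. }
    fold M1.
    repeat apply Rmult_le_compat; try apply Cmod_ge_0; auto; repeat apply Rmult_le_pos; try apply Cmod_ge_0.
  - unfold M1. rewrite Cmod_mult. lra.
  - rewrite Cmod_mult. apply Rmult_le_compat; try lra. apply pp_lb; auto. auto.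
Qed.

Lemma contig p x u v w (D1 D2 : C) :
  (Cmod p < 1)%R -> (Cmod x < 1)%R -> x * u * v = w -> (forall k, w * Cpow p k <> 1) ->
  is_series (dterm p x u v w) D1 -> is_series (dterm p x (u*p) (v*p) (w*p*p)) D2 ->
  (1 - w) * (1 - w * p) * D1 = (1 - x * v) * (1 - x * u) * D2.
Proof.
  intros Hp Hx Hw Hk H1 H2.
  assert (H3 := is_series_plus_C _ _ _ _ (is_series_scal_C ((1 - w) * (1 - w * p)) _ _ H1)
                  (is_series_scal_C (- ((1 - x * v) * (1 - x * u))) _ _ H2)).
  assert (H4 : is_series (fun n => (1 - w) * (1 - w * p) * dterm p x u v w n +
                   - ((1 - x * v) * (1 - x * u)) * dterm p x (u*p) (v*p) (w*p*p) n) (RtoC 0)).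
  { rewrite is_series_cs.
    apply Clim_ext with (fun n => - Gc p x u v w (S n)).
    { intros n. rewrite (cs_ext _ (fun k => Gc p x u v w k - Gc p x u v w (S k))).
      rewrite cs_telescope. replace (Gc p x u v w 0) with (RtoC 0) by reflexivity. ring. intros. apply contig_term; auto. }
    destruct (Gc_bound p x u v w Hp Hx Hk) as [K HK].
    apply (Clim_geom_bound _ K (Cmod x)). split. apply Cmod_ge_0. auto.
    intros n. replace (- Gc p x u v w (S n) - 0) with (- Gc p x u v w (S n)) by ring.
    rewrite Cmod_opp. apply HK. }
  pose proof (is_series_unique_C _ _ _ H3 H4).
  replace ((1 - w) * (1 - w * p) * D1) with
    ((1 - w) * (1 - w * p) * D1 + - ((1 - x * v) * (1 - x * u)) * D2 + (1 - x * v) * (1 - x * u) * D2) by ring.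
  rewrite H. ring.
Qed.


Lemma Cpow_lt1_S (q : C) k : (Cmod q < 1)%R -> (Cmod (Cpow q (S k)) < 1)%R.
Proof. intros. rewrite Cmod_pow. pose proof (Cmod_ge_0 q).
  apply pow_lt_1_compat. lra. lia. Qed.

Lemma one_plus_nz (q : C) k : (Cmod q < 1)%R -> 1 + Cpow q (S k) <> 0.
Proof. intros H E. pose proof (Cpow_lt1_S q k H).
  replace (Cpow q (S k)) with (- (1)) in H0 by (replace (Cpow q (S k)) with (1 + Cpow q (S k) - 1) by ring; rewrite E; ring).
  rewrite Cmod_opp, Cmod_1 in H0. lra. Qed.

Lemma Cmod_q2 (q : C) : (Cmod q < 1)%R -> (Cmod (Cpow q 2) < 1)%R.
Proof. intros. apply (Cpow_lt1_S q 1 H). Qed.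

Lemma Cpow_pow (q : C) a k : Cpow (Cpow q a) k = Cpow q (a * k).
Proof. now rewrite Cpow_mult_r. Qed.

Section F1.
Variable q : C.
Hypothesis Hq : (Cmod q < 1)%R.
Let p := Cpow q 2.
Let Hp : (Cmod p < 1)%R := Cmod_q2 q Hq.

Definition f1 (m d i : nat) : C :=
  (1 - Cpow q (2*(m+i)+1)) * Cpow q ((m+i)*(m+i) - m*m) / (qpoch p p (d - i) * qpoch p p (S (2*m + d + i))).

Lemma one_minus_nz (z : C) : (Cmod z < 1)%R -> 1 - z <> 0.
Proof. intros H E. replace z with (RtoC 1) in H by (replace z with (1 - (1 - z)) by ring; rewrite E; ring).
  rewrite Cmod_1 in H. lra. Qed.

Lemma pq_pow k : Cpow p k = Cpow q (2 * k).
Proof. unfold p. apply Cpow_pow. Qed.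

Lemma F1 m d : cs (f1 m d) d = / ((1 + Cpow q (2*(m+d)+1)) * qpoch p p d * qpoch p p (2*m+d)).
Proof.
  revert m. induction d as [|d IH]; intros m.
  - unfold cs, f1. rewrite !Nat.add_0_r, Nat.sub_diag.
    set (A := Cpow q (2 * m + 1)).
    assert (E2 : qpoch p p (S (2*m)) = qpoch p p (2*m) * (1 - A*A)).
    { rewrite qp_S. f_equal. f_equal. unfold A. rewrite pq_pow, <- Cpow_add_r.
      unfold p. rewrite <- Cpow_add_r. f_equal. lia. }
    rewrite E2. change (qpoch p p (0 - 0)) with (RtoC 1). change (qpoch p p 0) with (RtoC 1). change (Cpow q 0) with (RtoC 1).
    pose proof (pp_nz p (2*m) Hp).
    assert (1 + A <> 0) by (unfold A; rewrite Nat.add_1_r; apply one_plus_nz; auto).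
    assert (1 - A <> 0) by (unfold A; rewrite Nat.add_1_r; apply one_minus_nz, Cpow_lt1_S; auto).
    replace (1 - A * A) with ((1 - A) * (1 + A)) by ring.
    field. repeat split; auto.
  - rewrite cs_shift.
    rewrite (cs_ext _ (fun i => Cpow q (2*m+1) * f1 (S m) d i)).
    2:{ intros i Hi. unfold f1.
        replace (2 * (m + S i) + 1)%nat with (2 * (S m + i) + 1)%nat by lia.
        replace ((m + S i) * (m + S i) - m * m)%nat with ((2*m+1) + ((S m + i) * (S m + i) - S m * S m))%nat by nia.
        replace (S d - S i)%nat with (d - i)%nat by lia.
        replace (S (2 * m + S d + S i)) with (S (2 * S m + d + i)) by lia.
        rewrite (Cpow_add_r q (2*m+1)). unfold Cdiv. ring. }
    rewrite cs_scal, IH. unfold f1.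
    rewrite !Nat.add_0_r, Nat.sub_diag, Nat.sub_0_r.
    set (A := Cpow q (2 * m + 1)). set (C1 := Cpow q (2 * d + 2)).
    replace (2 * (m + S d) + 1)%nat with ((2 * m + 1) + (2 * d + 2))%nat by lia.
    replace (2 * (S m + d) + 1)%nat with ((2 * m + 1) + (2 * d + 2))%nat by lia.
    rewrite Cpow_add_r. fold A C1.
    replace (2 * S m + d)%nat with (S (2 * m + S d)) by lia.
    set (X := qpoch p p (2 * m + S d)).
    assert (E3 : qpoch p p (S (2 * m + S d)) = X * (1 - A * A * C1)).
    { unfold X. rewrite qp_S. f_equal. f_equal. unfold A, C1. rewrite pq_pow, <- !Cpow_add_r.
      unfold p. rewrite <- Cpow_add_r. f_equal. lia. }
    assert (E4 : qpoch p p (S d) = qpoch p p d * (1 - C1)).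
    { rewrite qp_S. f_equal. f_equal. unfold C1. rewrite pq_pow. unfold p. rewrite <- Cpow_add_r. f_equal. lia. }
    rewrite E3, E4. change (Cpow q 0) with (RtoC 1).
    pose proof (pp_nz p d Hp). pose proof (pp_nz p (2 * m + S d) Hp). fold X in H0.
    assert (1 + A * C1 <> 0) by (unfold A, C1; rewrite <- Cpow_add_r; replace (2 * m + 1 + (2 * d + 2))%nat with (S (2*m+2*d+2)) by lia; apply one_plus_nz; auto).
    assert (1 - C1 <> 0) by (unfold C1; replace (2 * d + 2)%nat with (S (2*d+1)) by lia; apply one_minus_nz, Cpow_lt1_S; auto).
    assert (1 - A * A * C1 <> 0).
    { unfold A, C1; rewrite <- !Cpow_add_r. replace (2 * m + 1 + (2 * m + 1) + (2 * d + 2))%nat with (S (4*m+2*d+3)) by lia.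
      apply one_minus_nz, Cpow_lt1_S; auto. }
    field. repeat split; auto.
Qed.

Definition m1 : C := Copp 1%R.

Definition gA (M i : nat) : C := Cpow m1 i / (qpoch p p i * qpoch p p (M - i)).

Lemma cs_S f n : cs f (S n) = cs f n + f (S n).
Proof. reflexivity. Qed.

Lemma m1_S k : Cpow m1 (S k) = - Cpow m1 k.
Proof. unfold m1. simpl. ring. Qed.

Lemma one_minus_ppow_nz k : 1 - Cpow p (S k) <> 0.
Proof. apply one_minus_pow_nz; auto. Qed.

Lemma gauss_cert k e : (1 - Cpow p (k + e + 2)) * cs (gA (k + e + 2)) (S k) - cs (gA (k + e)) k
  = Cpow m1 (S k) / (qpoch p p e * qpoch p p (S k)).
Proof.
  revert e. induction k as [|k IH]; intros e.
  - rewrite cs_S. unfold cs, gA. rewrite !Nat.add_0_l.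
    replace (e + 2 - 0)%nat with (S (S e)) by lia. replace (e + 2 - 1)%nat with (S e) by lia.
    rewrite Nat.sub_0_r. replace (e + 2)%nat with (S (S e)) by lia.
    rewrite !(qp_S p p (S e)), !(qp_S p p e), (qp_S p p 0).
    pose proof (pp_nz p e Hp). pose proof (one_minus_ppow_nz e). pose proof (one_minus_ppow_nz (S e)).
    pose proof (one_minus_ppow_nz 0). rewrite !Cpow_S in *. simpl qpoch. simpl Cpow in H2. rewrite Cmult_1_r in H2.
    unfold m1. simpl Cpow.
    field. repeat split; auto.
  - specialize (IH (S e)).
    replace (S k + e)%nat with (k + S e)%nat by lia.
    rewrite (cs_S (gA (k + S e + 2)) (S k)), (cs_S (gA (k + S e)) k).
    match goal with |- ?L = _ => replace L with
      (((1 - Cpow p (k + S e + 2)) * cs (gA (k + S e + 2)) (S k) - cs (gA (k + S e)) k)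
       + ((1 - Cpow p (k + S e + 2)) * gA (k + S e + 2) (S (S k)) - gA (k + S e) (S k))) by ring end.
    rewrite IH. unfold gA.
    replace (k + S e + 2 - S (S k))%nat with (S e) by lia.
    replace (k + S e - S k)%nat with e by lia.
    replace (k + S e + 2)%nat with (S (S k) + S e)%nat by lia.
    rewrite Cpow_add_r.
    rewrite !(qp_S p p (S k)), !(qp_S p p e).
    pose proof (pp_nz p e Hp). pose proof (pp_nz p (S k) Hp).
    pose proof (one_minus_ppow_nz e). pose proof (one_minus_ppow_nz (S k)).
    assert (1 - Cpow p (S (S k)) * Cpow p (S e) <> 0).
    { rewrite <- Cpow_add_r. apply one_minus_ppow_nz. }
    rewrite !m1_S. rewrite !Cpow_S in *.
    field. repeat split; auto.
Qed.

Definition gg (M : nat) : C := cs (gA M) M.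

Lemma gauss_rec M : (1 - Cpow p (M + 2)) * cs (gA (M + 2)) (S (S M)) = gg M.
Proof.
  pose proof (gauss_cert M 0) as H. rewrite !Nat.add_0_r in H. unfold gg.
  rewrite cs_S.
  replace ((1 - Cpow p (M + 2)) * (cs (gA (M + 2)) (S M) + gA (M + 2) (S (S M))))
    with (((1 - Cpow p (M + 2)) * cs (gA (M + 2)) (S M) - cs (gA M) M) + cs (gA M) M + (1 - Cpow p (M + 2)) * gA (M + 2) (S (S M))) by ring.
  rewrite H. unfold gA. replace (M + 2 - S (S M))%nat with 0%nat by lia.
  replace (M + 2)%nat with (S (S M)) by lia.
  rewrite (qp_S p p (S M)). pose proof (pp_nz p (S M) Hp). pose proof (one_minus_ppow_nz (S M)).
  rewrite Cpow_S in H1. rewrite (Cpow_S p (S M)). rewrite !m1_S. change (qpoch p p 0) with (RtoC 1).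
  field. split; auto.
Qed.

Lemma gauss_even n : gg (2 * n) * qpoch (Cpow q 4) (Cpow q 4) n = 1.
Proof.
  induction n as [|n IH].
  - unfold gg, gA. simpl. field.
  - pose proof (gauss_rec (2 * n)) as H. unfold gg in *.
    replace (2 * S n)%nat with (2 * n + 2)%nat by lia.
    replace (2 * n + 2)%nat with (S (S (2 * n))) at 2 by lia.
    rewrite qp_S. rewrite <- H in IH. etransitivity; [|exact IH].
    replace (Cpow q 4 * Cpow (Cpow q 4) n) with (Cpow p (2 * n + 2)). ring.
    unfold p. rewrite !Cpow_pow, <- Cpow_add_r. f_equal. lia.
Qed.
End F1.


Fixpoint csum (f : nat -> C) (N : nat) : C :=
  match N with O => RtoC 0 | S n => csum f n + f n end.

Lemma cs_csum (f : nat -> C) n : cs f n = csum f (S n).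
Proof. induction n; simpl. ring. rewrite IHn. simpl. ring. Qed.

Lemma csum_add (f : nat -> C) a b : csum f (a + b) = csum f a + csum (fun i => f (a + i)%nat) b.
Proof. induction b; simpl. rewrite Nat.add_0_r. ring. rewrite Nat.add_succ_r. simpl. rewrite IHb. ring. Qed.

Lemma csum_ext (f g : nat -> C) N : (forall i, (i < N)%nat -> f i = g i) -> csum f N = csum g N.
Proof. induction N; simpl; intros H. auto. rewrite IHN, H; auto. Qed.

Lemma csum_zero (f : nat -> C) N : (forall i, (i < N)%nat -> f i = 0) -> csum f N = 0.
Proof. induction N; simpl; intros H. auto. rewrite IHN, H; auto. ring. Qed.

Lemma csum_scal (c : C) (f : nat -> C) N : csum (fun i => c * f i) N = c * csum f N.
Proof. induction N; simpl. ring. rewrite IHN. ring. Qed.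

Lemma csum_plus (f g : nat -> C) N : csum (fun i => f i + g i) N = csum f N + csum g N.
Proof. induction N; simpl. ring. rewrite IHN. ring. Qed.

Lemma csum_swap (h : nat -> nat -> C) R K :
  csum (fun r => csum (fun k => h r k) K) R = csum (fun k => csum (fun r => h r k) R) K.
Proof.
  induction R; simpl. symmetry. apply csum_zero. auto.
  rewrite IHR. rewrite <- csum_plus. apply csum_ext. intros. simpl. auto.
Qed.

Lemma m1_add a b : Cpow m1 (a + b) = Cpow m1 a * Cpow m1 b.
Proof. apply Cpow_add_r. Qed.

Lemma m1_sq a : Cpow m1 a * Cpow m1 a = 1.
Proof. induction a; simpl. ring. unfold m1 in *. replace (- 1%R * Cpow (- 1%R) a * (- 1%R * Cpow (- 1%R) a)) with (Cpow (- 1%R) a * Cpow (- 1%R) a) by ring. auto. Qed.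

Section BP.
Variable q : C.
Hypothesis Hq : (Cmod q < 1)%R.
Let p := Cpow q 2.
Let Hp : (Cmod p < 1)%R := Cmod_q2 q Hq.

Definition ee (n r : nat) : C := / (qpoch p p (n - r) * qpoch p p (S (n + r))).
Definition alpha (r : nat) : C := (1 - Cpow q (2*r+1)) * inner_sum q r.

Definition zj (k n : nat) : Z := (Z.of_nat k - Z.of_nat n)%Z.

Definition indf (n r k : nat) : C :=
  if Z.leb (Z.abs (zj k n)) (Z.of_nat r) then
    Cpow m1 (Z.abs_nat (zj k n)) * Cpow q (Z.to_nat (Z.of_nat r * Z.of_nat r - zj k n * zj k n))
  else 0.

Lemma indf_cond n r k : Z.leb (Z.abs (zj k n)) (Z.of_nat r) = Nat.leb (Z.abs_nat (zj k n)) r.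
Proof.
  pose proof (Zabs2Nat.id_abs (zj k n)).
  destruct (Z.leb_spec (Z.abs (zj k n)) (Z.of_nat r)); destruct (Nat.leb_spec (Z.abs_nat (zj k n)) r); auto; lia.
Qed.

Lemma indf_val n r k : (Z.abs_nat (zj k n) <= r)%nat ->
  indf n r k = Cpow m1 (Z.abs_nat (zj k n)) * Cpow q (r * r - Z.abs_nat (zj k n) * Z.abs_nat (zj k n)).
Proof.
  intros H. unfold indf. rewrite indf_cond. destruct (Nat.leb_spec (Z.abs_nat (zj k n)) r); [|lia].
  f_equal. f_equal.
  set (m := Z.abs_nat (zj k n)) in *.
  assert (E : (zj k n * zj k n)%Z = Z.of_nat (m * m)).
  { rewrite Nat2Z.inj_mul. unfold m. rewrite Zabs2Nat.id_abs. apply eq_sym, Z.abs_square. }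
  rewrite E. assert (m * m <= r * r)%nat by (apply Nat.mul_le_mono; auto).
  rewrite <- Nat2Z.inj_mul, <- Nat2Z.inj_sub by auto. apply Nat2Z.id.
Qed.

Lemma indf_zero n r k : (r < Z.abs_nat (zj k n))%nat -> indf n r k = 0.
Proof. intros H. unfold indf. rewrite indf_cond. destruct (Nat.leb_spec (Z.abs_nat (zj k n)) r); [lia|auto]. Qed.

Lemma inner_sum_ext n r : (r <= n)%nat -> inner_sum q r = csum (indf n r) (S (2 * n)).
Proof.
  intros Hrn. unfold inner_sum.
  change (sum_n_m ?F 0 (2 * r)) with (sum_n F (2 * r)). rewrite cs_sum_n, cs_csum.
  replace (S (2 * n)) with ((n - r) + (S (2 * r) + (n - r)))%nat by lia.
  rewrite csum_add, csum_add.
  rewrite (csum_zero (indf n r)).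
  2:{ intros i Hi. apply indf_zero. unfold zj. lia. }
  rewrite (csum_zero (fun i => indf n r (n - r + (S (2 * r) + i)))).
  2:{ intros i Hi. apply indf_zero. unfold zj. lia. }
  rewrite Cplus_0_l, Cplus_0_r. apply csum_ext. intros i Hi.
  unfold indf. replace (zj (n - r + i) n) with (Z.of_nat i - Z.of_nat r)%Z by (unfold zj; lia).
  replace (Z.leb (Z.abs (Z.of_nat i - Z.of_nat r)) (Z.of_nat r)) with true.
  reflexivity. symmetry. apply Z.leb_le. lia.
Qed.

Lemma colsum n k : (k <= 2 * n)%nat ->
  csum (fun r => ee n r * (1 - Cpow q (2*r+1)) * indf n r k) (S n) =
  Cpow m1 (Z.abs_nat (zj k n)) / ((1 + Cpow q (2*n+1)) * qpoch p p (n - Z.abs_nat (zj k n)) * qpoch p p (n + Z.abs_nat (zj k n))).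
Proof.
  intros Hk. set (mk := Z.abs_nat (zj k n)).
  assert (Hmk : (mk <= n)%nat) by (unfold mk, zj; lia).
  set (d := (n - mk)%nat).
  replace (S n) with (mk + S d)%nat by lia.
  rewrite csum_add. rewrite csum_zero.
  2:{ intros i Hi. rewrite indf_zero by (unfold mk in Hi; lia). ring. }
  rewrite Cplus_0_l.
  rewrite (csum_ext _ (fun i => Cpow m1 mk * f1 q mk d i)).
  2:{ intros i Hi. rewrite indf_val by (fold mk; lia). fold mk. unfold ee, f1.
      replace (n - (mk + i))%nat with (d - i)%nat by lia.
      replace (S (n + (mk + i))) with (S (2 * mk + d + i)) by lia.
      unfold Cdiv. fold p. ring. }
  rewrite csum_scal, <- cs_csum, F1 by auto.
  replace (2 * (mk + d) + 1)%nat with (2 * n + 1)%nat by lia.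
  replace (2 * mk + d)%nat with (n + mk)%nat by lia.
  fold p. unfold Cdiv. ring.
Qed.

Lemma BP n : cs (fun r => alpha r * ee n r) n =
  Cpow m1 n / ((1 + Cpow q (2*n+1)) * qpoch (Cpow q 4) (Cpow q 4) n).
Proof.
  rewrite cs_csum.
  rewrite (csum_ext _ (fun r => csum (fun k => ee n r * (1 - Cpow q (2*r+1)) * indf n r k) (S (2 * n)))).
  2:{ intros r Hr. unfold alpha. rewrite (inner_sum_ext n r) by lia.
      transitivity ((ee n r * (1 - Cpow q (2*r+1))) * csum (indf n r) (S (2*n))). ring. rewrite <- csum_scal. reflexivity. }
  rewrite csum_swap.
  set (B := Cpow q (2 * n + 1)).
  rewrite (csum_ext _ (fun k => Cpow m1 n / (1 + B) * gA q (2 * n) k)).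
  2:{ intros k Hk. rewrite colsum by lia. fold B. unfold gA. fold p.
      assert (1 + B <> 0) by (unfold B; rewrite Nat.add_1_r; apply one_plus_nz; auto).
      destruct (le_lt_dec k n) as [Hkn|Hkn].
      - assert (E : Z.abs_nat (zj k n) = (n - k)%nat) by (unfold zj; lia). rewrite E.
        replace (n - (n - k))%nat with k by lia. replace (n + (n - k))%nat with (2 * n - k)%nat by lia.
        pose proof (pp_nz p k Hp). pose proof (pp_nz p (2 * n - k) Hp).
        replace (Cpow m1 n) with (Cpow m1 (n - k) * Cpow m1 k) by (rewrite <- m1_add; f_equal; lia).
        pose proof (m1_sq k) as S2.
        replace (Cpow m1 (n - k)) with (Cpow m1 (n - k) * (Cpow m1 k * Cpow m1 k)) at 1 by (rewrite S2; ring).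
        field. repeat split; auto.
      - assert (E : Z.abs_nat (zj k n) = (k - n)%nat) by (unfold zj; lia). rewrite E.
        replace (n - (k - n))%nat with (2 * n - k)%nat by lia. replace (n + (k - n))%nat with k by lia.
        pose proof (pp_nz p k Hp). pose proof (pp_nz p (2 * n - k) Hp).
        replace (Cpow m1 k) with (Cpow m1 n * Cpow m1 (k - n)) by (rewrite <- m1_add; f_equal; lia).
        pose proof (m1_sq n) as S2.
        replace (Cpow m1 (k - n)) with (Cpow m1 (k - n) * (Cpow m1 n * Cpow m1 n)) at 1 by (rewrite S2; ring).
        field. repeat split; auto. }
  rewrite csum_scal, <- cs_csum.
  pose proof (gauss_even q Hq n) as G. unfold gg in G.
  assert (Q : qpoch (Cpow q 4) (Cpow q 4) n <> 0).
  { intro E. rewrite E, Cmult_0_r in G. apply C1_nz. rewrite <- G. reflexivity. }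
  assert (1 + B <> 0) by (unfold B; rewrite Nat.add_1_r; apply one_plus_nz; auto).
  replace (cs (gA q (2 * n)) (2 * n)) with (/ qpoch (Cpow q 4) (Cpow q 4) n).
  field. split; auto.
  set (X := cs (gA q (2 * n)) (2 * n)) in *.
  replace X with (X * qpoch (Cpow q 4) (Cpow q 4) n / qpoch (Cpow q 4) (Cpow q 4) n) by (field; auto).
  rewrite G. field. auto.
Qed.
End BP.


Definition CSer (a : nat -> C) : C := epsilon (inhabits (RtoC 0)) (fun l => is_series a l).

Lemma CSer_spec (a : nat -> C) : (exists l : C, is_series a l) -> is_series a (CSer a).
Proof. intros H. unfold CSer. apply epsilon_spec. exact H. Qed.

Lemma lin_geom_aux s r : (0 <= s < 1)%R -> (INR (S r) * s ^ r <= (1 - s ^ (S r)) / (1 - s))%R.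
Proof.
  intros Hs. induction r as [|r IH].
  - simpl. right. field. lra.
  - rewrite S_INR.
    assert (H1 : (s ^ S r <= 1)%R) by (apply pow_le1; lra).
    assert (H0 : (0 <= s ^ r)%R) by (apply pow_le; lra).
    apply Rle_trans with (s * (INR (S r) * s ^ r) + s ^ S r)%R.
    { simpl. right. ring. }
    apply Rle_trans with (s * ((1 - s ^ S r) / (1 - s)) + s ^ S r)%R.
    { apply Rplus_le_compat_r. apply Rmult_le_compat_l; lra. }
    apply Rmult_le_reg_r with (1 - s)%R. lra.
    replace ((s * ((1 - s ^ S r) / (1 - s)) + s ^ S r) * (1 - s))%R with (s - s * s ^ S r + s ^ S r * (1 - s))%R by (field; lra).
    replace ((1 - s ^ S (S r)) / (1 - s) * (1 - s))%R with (1 - s * s ^ S r)%R by (simpl; field; lra).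
    nra.
Qed.

Lemma lin_geom s r : (0 <= s < 1)%R -> (INR (S r) * s ^ r <= / (1 - s))%R.
Proof.
  intros Hs. eapply Rle_trans. apply lin_geom_aux; auto.
  unfold Rdiv. rewrite <- (Rmult_1_l (/ (1 - s))) at 2. apply Rmult_le_compat_r.
  left. apply Rinv_0_lt_compat. lra. pose proof (pow_le s (S r) ltac:(lra)). lra.
Qed.

Lemma cs_bound1 (f : nat -> C) n : (forall k, (Cmod (f k) <= 1)%R) -> (Cmod (cs f n) <= INR (S n))%R.
Proof.
  intros H. induction n; simpl cs.
  - simpl. apply H.
  - eapply Rle_trans. apply Cmod_triangle. rewrite (S_INR (S n)). specialize (H (S n)). lra.
Qed.

Lemma m1_mod k : Cmod (Cpow m1 k) = 1%R.
Proof. rewrite Cmod_pow. unfold m1. rewrite Cmod_opp, Cmod_1. apply pow1. Qed.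

Lemma inner_sum_bound q r : (Cmod q < 1)%R -> (Cmod (inner_sum q r) <= INR (S (2 * r)))%R.
Proof.
  intros Hq. unfold inner_sum. change (sum_n_m ?F 0 (2 * r)) with (sum_n F (2 * r)). rewrite cs_sum_n.
  apply cs_bound1. intros k. simpl. rewrite Cmod_mult.
  change (Copp 1%R) with m1. rewrite m1_mod, Rmult_1_l. rewrite Cmod_pow. apply pow_le1.
  split. apply Cmod_ge_0. lra.
Qed.

Lemma alpha_bound q r : (Cmod q < 1)%R -> (Cmod (alpha q r) <= 4 * (INR (S r)))%R.
Proof.
  intros Hq. unfold alpha. rewrite Cmod_mult.
  assert (A : (Cmod (1 - Cpow q (2 * r + 1)) <= 2)%R).
  { eapply Rle_trans. apply Cmod_1_minus_le. rewrite Cmod_pow. pose proof (pow_le1 (Cmod q) (2*r+1)).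
    pose proof (Cmod_ge_0 q). assert (Cmod q ^ (2 * r + 1) <= 1)%R by (apply H; lra). lra. }
  pose proof (inner_sum_bound q r Hq).
  rewrite !S_INR in *. rewrite mult_INR in H. simpl (INR 2) in H.
  apply Rle_trans with (2 * (2 * INR r + 1))%R.
  apply Rmult_le_compat; try apply Cmod_ge_0; auto. pose proof (pos_INR r). lra.
Qed.

Lemma tri_swap (h : nat -> nat -> C) N :
  cs (fun n => cs (fun r => h n r) n) N = cs (fun r => cs (fun k => h (r + k)%nat r) (N - r)) N.
Proof.
  induction N as [|N IH].
  - simpl. reflexivity.
  - rewrite cs_S, IH. rewrite (cs_S (fun r => cs (fun k => h (r + k)%nat r) (S N - r)) N).
    replace (S N - S N)%nat with 0%nat by lia. simpl (cs _ 0). rewrite (cs_S (fun r => h (S N) r) N).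
    rewrite (cs_ext (fun r => cs (fun k => h (r + k)%nat r) (S N - r)) (fun r => cs (fun k => h (r + k)%nat r) (N - r) + h (S N) r)).
    2:{ intros r Hr. replace (S N - r)%nat with (S (N - r)) by lia. rewrite cs_S. f_equal. f_equal. lia. }
    rewrite cs_plus. rewrite Nat.add_0_r. rewrite Cplus_assoc. reflexivity.
Qed.

Lemma qp_lb_unif x p T n : (Cmod p < 1)%R -> (Cmod x <= T)%R -> (T < 1)%R ->
  (exp (- (T / ((1 - T) * (1 - Cmod p)))) <= Cmod (qpoch x p n))%R.
Proof.
  intros Hp Hx HT. eapply Rle_trans. 2: apply qp_lb_small; auto; lra.
  apply exp_le'. apply Ropp_le_contravar. pose proof (Cmod_ge_0 x). pose proof (Cmod_ge_0 p).
  replace (Cmod x / ((1 - Cmod x) * (1 - Cmod p)))%R with ((Cmod x / (1 - Cmod x)) / (1 - Cmod p))%R by (field; lra).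
  replace (T / ((1 - T) * (1 - Cmod p)))%R with ((T / (1 - T)) / (1 - Cmod p))%R by (field; lra).
  unfold Rdiv at 1 3. apply Rmult_le_compat_r. left. apply Rinv_0_lt_compat. lra.
  apply Rmult_le_reg_r with ((1 - Cmod x) * (1 - T))%R. nra.
  replace (Cmod x / (1 - Cmod x) * ((1 - Cmod x) * (1 - T)))%R with (Cmod x * (1 - T))%R by (field; lra).
  replace (T / (1 - T) * ((1 - Cmod x) * (1 - T)))%R with (T * (1 - Cmod x))%R by (field; lra).
  nra.
Qed.


Section Main.
Variables q a c : C.
Hypothesis Hq0 : (0 < Cmod q)%R.
Hypothesis Hq1 : (Cmod q < 1)%R.
Hypothesis Ha : a <> 0.
Hypothesis Hc : c <> 0.
Hypothesis Hak : forall k : nat, a * Cpow q (2 * k + 2) <> 1.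
Hypothesis Hck : forall k : nat, c * Cpow q (2 * k + 2) <> 1.
Hypothesis Hx : (Cmod (a * c) < 1)%R.

Let p := Cpow q 2.
Let x := a * c.
Let r1 := p / a.
Let r2 := p / c.
Let Hp : (Cmod p < 1)%R := Cmod_q2 q Hq1.

Lemma Hp0 : (0 <= Cmod p)%R.
Proof. apply Cmod_ge_0. Qed.

Lemma pz_k (z : C) : (forall k : nat, z * Cpow q (2 * k + 2) <> 1) -> forall k, (p * z) * Cpow p k <> 1.
Proof.
  intros H k. replace ((p * z) * Cpow p k) with (z * Cpow q (2 * k + 2)). apply H.
  unfold p. rewrite Cpow_pow. rewrite (Nat.add_comm (2 * k) 2), Cpow_add_r. ring.
Qed.

Definition u (r : nat) : C := r1 * Cpow p r.
Definition v (r : nat) : C := r2 * Cpow p r.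
Definition w (r : nat) : C := p * p * Cpow p (2 * r).

Lemma Hw r : x * u r * v r = w r.
Proof. unfold x, u, v, w, r1, r2. replace (2 * r)%nat with (r + r)%nat by lia. rewrite Cpow_add_r. field. split; auto. Qed.

Lemma T_lt : (Cmod p * Cmod p < 1)%R.
Proof. pose proof Hp0. pose proof Hp. nra. Qed.

Lemma w_mod r : (Cmod (w r) <= Cmod p * Cmod p)%R.
Proof. unfold w. rewrite !Cmod_mult. pose proof (Cmod_pow_le1 p (2 * r) Hp). pose proof Hp0.
  rewrite <- (Rmult_1_r (Cmod p * Cmod p)) at 2. apply Rmult_le_compat_l; nra. Qed.

Lemma Hwk r : forall k, w r * Cpow p k <> 1.
Proof.
  intros k E. apply (f_equal Cmod) in E. rewrite Cmod_mult, Cmod_1 in E.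
  pose proof (w_mod r). pose proof (Cmod_pow_le1 p k Hp). pose proof T_lt.
  pose proof (Cmod_ge_0 (w r)). pose proof (Cmod_ge_0 (Cpow p k)). nra.
Qed.

Lemma u_mod r : (Cmod (u r) <= Cmod r1)%R.
Proof. unfold u. rewrite Cmod_mult. pose proof (Cmod_pow_le1 p r Hp). pose proof (Cmod_ge_0 r1).
  pose proof (Cmod_ge_0 (Cpow p r)). nra. Qed.
Lemma v_mod r : (Cmod (v r) <= Cmod r2)%R.
Proof. unfold v. rewrite Cmod_mult. pose proof (Cmod_pow_le1 p r Hp). pose proof (Cmod_ge_0 r2).
  pose proof (Cmod_ge_0 (Cpow p r)). nra. Qed.

Definition Bnd (z : C) : R := exp (Cmod z / (1 - Cmod p)).
Definition cw : R := exp (- (Cmod p * Cmod p / ((1 - Cmod p * Cmod p) * (1 - Cmod p)))).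

Lemma ub_mono z z' n : (Cmod z <= Cmod z')%R -> (Cmod (qpoch z p n) <= Bnd z')%R.
Proof. intros H. eapply Rle_trans. apply qp_ub; auto. apply exp_le'. unfold Rdiv.
  apply Rmult_le_compat_r; auto. left. apply Rinv_0_lt_compat. lra. Qed.

Lemma w_lb r n : (cw <= Cmod (qpoch (w r) p n))%R.
Proof. apply qp_lb_unif; auto. apply w_mod. apply T_lt. Qed.

Definition dt (r k : nat) : C := dterm p x (u r) (v r) (w r) k.
Definition Kd : R := (Bnd r1 * Bnd r2 / (cpc p * cw))%R.

Lemma cw_pos : (0 < cw)%R.
Proof. apply exp_pos. Qed.

Lemma dt_bound r k : (Cmod (dt r k) <= Kd * Cmod x ^ k)%R.
Proof.
  unfold dt, dterm, Kd.
  replace (Bnd r1 * Bnd r2 / (cpc p * cw) * Cmod x ^ k)%R with (Bnd r1 * Bnd r2 * Cmod x ^ k / (cpc p * cw))%R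
    by (field; split; [pose proof cw_pos | pose proof (cpc_pos p)]; lra).
  apply Cmod_div_le. apply Rmult_lt_0_compat. apply cpc_pos. apply cw_pos.
  - rewrite !Cmod_mult, Cmod_pow. apply Rmult_le_compat. apply Rmult_le_pos; apply Cmod_ge_0. apply pow_le, Cmod_ge_0.
    apply Rmult_le_compat; try apply Cmod_ge_0. apply ub_mono, u_mod. apply ub_mono, v_mod. lra.
  - rewrite Cmod_mult. apply Rmult_le_compat. left; apply cpc_pos. left; apply cw_pos. apply pp_lb; auto. apply w_lb.
Qed.

Definition D (r : nat) : C := CSer (dt r).

Lemma HD r : is_series (dt r) (D r).
Proof. apply CSer_spec. apply (ex_series_geom_C _ Kd (Cmod x)). split. apply Cmod_ge_0. exact Hx. apply dt_bound. Qed.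

Lemma D_step r : (1 - w r) * (1 - w r * p) * D r = (1 - p * a * Cpow p r) * (1 - p * c * Cpow p r) * D (S r).
Proof.
  assert (E1 : x * v r = p * a * Cpow p r) by (unfold x, v, r2; field; auto).
  assert (E2 : x * u r = p * c * Cpow p r) by (unfold x, u, r1; field; auto).
  rewrite <- E1, <- E2. apply (contig p x (u r) (v r) (w r)); auto. apply Hw. apply Hwk. apply HD.
  apply is_series_ext_C with (dt (S r)). 2: apply HD.
  intros k. unfold dt. f_equal. unfold u. simpl. ring. unfold v. simpl. ring.
  unfold w. replace (2 * S r)%nat with (S (S (2 * r))) by lia. simpl. ring.
Qed.

Lemma D_inv r : D r * qpoch (p * a) p r * qpoch (p * c) p r * (1 - p) = D 0 * qpoch p p (S (2 * r)).
Proof.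
  induction r as [|r IH].
  - simpl. ring.
  - rewrite !qp_S. replace (2 * S r)%nat with (S (S (2 * r))) by lia. rewrite !qp_S.
    pose proof (D_step r) as Hs.
    replace (D (S r) * (qpoch (p * a) p r * (1 - p * a * Cpow p r)) * (qpoch (p * c) p r * (1 - p * c * Cpow p r)) * (1 - p))
      with ((1 - p * a * Cpow p r) * (1 - p * c * Cpow p r) * D (S r) * (qpoch (p * a) p r * qpoch (p * c) p r * (1 - p))) by ring.
    rewrite <- Hs.
    replace ((1 - w r) * (1 - w r * p) * D r * (qpoch (p * a) p r * qpoch (p * c) p r * (1 - p)))
      with ((1 - w r) * (1 - w r * p) * (D r * qpoch (p * a) p r * qpoch (p * c) p r * (1 - p))) by ring.
    rewrite IH. unfold w. rewrite (Cpow_S p (S (2 * r))), (Cpow_S p (2 * r)). rewrite (qp_S p p (2 * r)). ring.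
Qed.

Definition Ex : C := CSer (eterm p x).

Lemma HEx : is_series (eterm p x) Ex.
Proof. apply CSer_spec. apply eterm_ex; auto. Qed.

Lemma pow_le_sq (t : R) r : (0 <= t <= 1)%R -> (t * t * t ^ (2 * r) <= t ^ r)%R.
Proof. intros H. replace (2 * r)%nat with (r + r)%nat by lia. rewrite pow_add.
  pose proof (pow_le1 t r H). pose proof (pow_le t r ltac:(lra)).
  assert (t * t <= 1)%R by nra. assert (t * t * t ^ r <= 1)%R. { pose proof (Rmult_le_compat (t*t) (t^r) 1 1). nra. }
  replace (t * t * (t ^ r * t ^ r))%R with ((t * t * t ^ r) * t ^ r)%R by ring. nra. Qed.

Lemma dt_lim k : Clim (fun r => dt r k) (eterm p x k).
Proof.
  assert (Hu : Clim u 0).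
  { apply (Clim_geom_bound _ (Cmod r1) (Cmod p)). split. apply Hp0. auto.
    intros r. replace (u r - 0) with (u r) by ring. unfold u. rewrite Cmod_mult, Cmod_pow. lra. }
  assert (Hv : Clim v 0).
  { apply (Clim_geom_bound _ (Cmod r2) (Cmod p)). split. apply Hp0. auto.
    intros r. replace (v r - 0) with (v r) by ring. unfold v. rewrite Cmod_mult, Cmod_pow. lra. }
  assert (Hw0 : Clim w 0).
  { apply (Clim_geom_bound _ 1 (Cmod p)). split. apply Hp0. auto.
    intros r. replace (w r - 0) with (w r) by ring. unfold w. rewrite !Cmod_mult, Cmod_pow. rewrite Rmult_1_l.
    apply pow_le_sq. pose proof Hp0. pose proof Hp. lra. }
  unfold dt, dterm, eterm, Cdiv.
  replace (Cpow x k * / qpoch p p k) with ((1 * 1 * Cpow x k) * / (qpoch p p k * 1)) by (field; apply pp_nz; auto).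
  apply Clim_mult.
  - apply Clim_mult. apply Clim_mult. apply qp_lim_param; auto. apply qp_lim_param; auto. apply Clim_const.
  - apply (Clim_inv_lb _ _ (cpc p * cw)). apply Rmult_lt_0_compat. apply cpc_pos. apply cw_pos.
    intros r. rewrite Cmod_mult. apply Rmult_le_compat. left; apply cpc_pos. left; apply cw_pos. apply pp_lb; auto. apply w_lb.
    apply Clim_mult. apply Clim_const. apply qp_lim_param; auto.
Qed.

Lemma D_lim : Clim D Ex.
Proof.
  apply (dct dt D (eterm p x) Ex Kd (Cmod x)). split. apply Cmod_ge_0. exact Hx.
  apply dt_bound. apply HD. apply dt_lim. apply HEx.
Qed.

Lemma key_rel (P1 P3 P4 : C) : Clim (qpoch p p) P1 -> Clim (qpoch (p * a) p) P3 -> Clim (qpoch (p * c) p) P4 ->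
  Ex * P3 * P4 * (1 - p) = D 0 * P1.
Proof.
  intros H1 H3 H4.
  apply (Clim_unique (fun r => D r * qpoch (p * a) p r * qpoch (p * c) p r * (1 - p))).
  - apply Clim_mult. apply Clim_mult. apply Clim_mult. apply D_lim. auto. auto. apply Clim_const.
  - apply Clim_ext with (fun r => D 0 * qpoch p p (S (2 * r))). intros r. symmetry. apply D_inv.
    apply Clim_scal. apply (Clim_subseq (qpoch p p) P1 (fun r => S (2 * r))). intros; lia. auto.
Qed.

Definition gam (n : nat) : C := qpoch r1 p n * qpoch r2 p n * Cpow x n.

Definition Bg : R := (Bnd r1 * Bnd r2)%R.

Lemma Bnd_pos z : (0 < Bnd z)%R.
Proof. apply exp_pos. Qed.

Lemma gam_bound n : (Cmod (gam n) <= Bg * Cmod x ^ n)%R.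
Proof. unfold gam, Bg. rewrite !Cmod_mult, Cmod_pow.
  apply Rmult_le_compat. apply Rmult_le_pos; apply Cmod_ge_0. apply pow_le, Cmod_ge_0.
  apply Rmult_le_compat; try apply Cmod_ge_0; apply ub_mono; lra. lra. Qed.

Lemma ee_bound n r : (Cmod (ee q n r) <= / (cpc p * cpc p))%R.
Proof.
  unfold ee. pose proof (cpc_pos p).
  assert (H1 : (cpc p * cpc p <= Cmod (qpoch p p (n - r) * qpoch p p (S (n + r))))%R).
  { rewrite Cmod_mult. apply Rmult_le_compat; try lra; apply pp_lb; auto. }
  assert (qpoch p p (n - r) * qpoch p p (S (n + r)) <> 0).
  { intro E. rewrite E, Cmod_0 in H1. nra. }
  rewrite Cmod_inv by auto. apply Rinv_le_contravar; auto. nra.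
Qed.

Definition fB (N r : nat) : C :=
  if Nat.leb r N then alpha q r * cs (fun k => gam (r + k) * ee q (r + k) r) (N - r) else 0.

Definition S2t (n : nat) : C := gam n * cs (fun r => alpha q r * ee q n r) n.

Lemma fB_sum N : cs S2t N = cs (fB N) N.
Proof.
  unfold S2t. rewrite (cs_ext _ (fun n => cs (fun r => gam n * (alpha q r * ee q n r)) n)).
  2:{ intros. rewrite cs_scal. reflexivity. }
  rewrite tri_swap. apply cs_ext. intros r Hr. unfold fB.
  destruct (Nat.leb_spec r N); [|lia].
  rewrite <- cs_scal. apply cs_ext. intros. ring.
Qed.

Lemma fB_series N : is_series (fB N) (cs S2t N).
Proof. rewrite fB_sum. apply is_series_finite. intros k Hk. unfold fB. destruct (Nat.leb_spec k N); [lia|auto]. Qed.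

Definition delta (r : nat) : C := gam r / qpoch p p (S (2 * r)) * D r.

Lemma delta_term r k : gam (r + k) * ee q (r + k) r = gam r / qpoch p p (S (2 * r)) * dt r k.
Proof.
  unfold gam, ee, dt, dterm.
  replace (r + k - r)%nat with k by lia.
  replace (S (r + k + r)) with (S (2 * r) + k)%nat by lia.
  rewrite !qp_add, Cpow_add_r. fold p.
  replace (p * Cpow p (S (2 * r))) with (w r) by (unfold w; simpl; ring).
  fold (u r). fold (v r). change (r1 * Cpow p r) with (u r). change (r2 * Cpow p r) with (v r).
  pose proof (pp_nz p k Hp). pose proof (pp_nz p (S (2 * r)) Hp). pose proof (qp_nz (w r) p k (Hwk r)).
  field. repeat split; auto.
Qed.

Lemma delta_series r : is_series (fun k => gam (r + k) * ee q (r + k) r) (delta r).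
Proof.
  apply is_series_ext_C with (fun k => gam r / qpoch p p (S (2 * r)) * dt r k).
  intros k. symmetry. apply delta_term.
  unfold delta. apply is_series_scal_C. apply HD.
Qed.

Lemma fB_lim r : Clim (fun N => fB N r) (alpha q r * delta r).
Proof.
  apply Clim_ext_ev with (N0 := r) (u := fun N => alpha q r * cs (fun k => gam (r + k) * ee q (r + k) r) (N - r)).
  { intros N HN. unfold fB. destruct (Nat.leb_spec r N); [auto|lia]. }
  apply Clim_scal. apply Clim_shift_back. rewrite <- is_series_cs. apply delta_series.
Qed.

Lemma cs_geom_bound (f : nat -> C) K s m : (0 <= s < 1)%R -> (forall k, (Cmod (f k) <= K * s ^ k)%R) ->
  (Cmod (cs f m) <= K / (1 - s))%R.
Proof.
  intros Hs Hf. assert (HK : (0 <= K)%R). { pose proof (Hf O). pose proof (Cmod_ge_0 (f O)). simpl in H. lra. }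
  assert (forall m, Cmod (cs f m) <= K * (1 - s ^ S m) / (1 - s))%R.
  { induction m0; simpl cs.
    - eapply Rle_trans. apply Hf. simpl. right. field. lra.
    - eapply Rle_trans. apply Cmod_triangle. eapply Rle_trans. apply Rplus_le_compat. apply IHm0. apply Hf.
      right. simpl. field. lra. }
  eapply Rle_trans. apply H. unfold Rdiv. apply Rmult_le_compat_r. left. apply Rinv_0_lt_compat. lra.
  pose proof (pow_le s (S m) ltac:(lra)). nra.
Qed.

Let t := sqrt (Cmod x).
Lemma t_bounds : (0 <= t < 1)%R.
Proof. unfold t. split. apply sqrt_pos. rewrite <- sqrt_1. apply sqrt_lt_1_alt. split. apply Cmod_ge_0. exact Hx. Qed.

Lemma x_pow_t r : (Cmod x ^ r = t ^ r * t ^ r)%R.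
Proof. unfold t. rewrite <- Rpow_mult_distr. rewrite sqrt_sqrt. auto. apply Cmod_ge_0. Qed.

Definition KB : R := (4 * (Bg / (cpc p * cpc p) / (1 - Cmod x)) / (1 - t))%R.

Lemma KB_part : (0 < 4 * (Bg / (cpc p * cpc p) / (1 - Cmod x)))%R.
Proof.
  pose proof (cpc_pos p) as Hc0.
  assert (HBg : (0 < Bg)%R) by (unfold Bg; apply Rmult_lt_0_compat; apply Bnd_pos).
  assert (0 < cpc p * cpc p)%R by (apply Rmult_lt_0_compat; exact Hc0).
  assert (Cmod x < 1)%R by exact Hx. apply Rmult_lt_0_compat. lra. apply Rdiv_lt_0_compat. apply Rdiv_lt_0_compat; auto. lra.
Qed.

Lemma fB_bound N r : (Cmod (fB N r) <= KB * t ^ r)%R.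
Proof.
  pose proof t_bounds as Ht. pose proof (cpc_pos p) as Hc0. pose proof (Cmod_ge_0 x) as Hx0. assert (Hx2 : (Cmod x < 1)%R) by exact Hx.
  assert (HBg : (0 < Bg)%R) by (unfold Bg; apply Rmult_lt_0_compat; apply Bnd_pos).
  assert (HKB : (0 <= KB)%R).
  { unfold KB. unfold Rdiv at 1. apply Rlt_le. apply Rmult_lt_0_compat. apply KB_part. apply Rinv_0_lt_compat; lra. }
  unfold fB. destruct (Nat.leb_spec r N).
  2:{ rewrite Cmod_0. pose proof (pow_le t r ltac:(lra)). nra. }
  rewrite Cmod_mult.
  set (K0 := (Bg * Cmod x ^ r / (cpc p * cpc p))%R).
  assert (Hcs : (Cmod (cs (fun k => (gam (r + k) * ee q (r + k) r)%C) (N - r)) <= K0 / (1 - Cmod x))%R).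
  { apply cs_geom_bound. split; auto.
    intros k. rewrite Cmod_mult. unfold K0.
    replace (Bg * Cmod x ^ r / (cpc p * cpc p) * Cmod x ^ k)%R with ((Bg * Cmod x ^ (r + k)) * / (cpc p * cpc p))%R
      by (rewrite pow_add; field; lra).
    apply Rmult_le_compat; try apply Cmod_ge_0. apply gam_bound. apply ee_bound. }
  pose proof (alpha_bound q r Hq1) as HA.
  pose proof (lin_geom t r Ht) as HL.
  apply Rle_trans with (4 * INR (S r) * (K0 / (1 - Cmod x)))%R.
  { apply Rmult_le_compat; try apply Cmod_ge_0; auto. }
  unfold K0, KB. rewrite x_pow_t.
  assert (0 <= t ^ r)%R by (apply pow_le; lra).
  replace (4 * INR (S r) * (Bg * (t ^ r * t ^ r) / (cpc p * cpc p) / (1 - Cmod x)))%R with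
    ((INR (S r) * t ^ r) * (4 * (Bg / (cpc p * cpc p) / (1 - Cmod x))) * t ^ r)%R by (field; lra).
  replace (4 * (Bg / (cpc p * cpc p) / (1 - Cmod x)) / (1 - t) * t ^ r)%R with
    ((/ (1 - t)) * (4 * (Bg / (cpc p * cpc p) / (1 - Cmod x))) * t ^ r)%R by (field; lra).
  apply Rmult_le_compat_r; auto. apply Rmult_le_compat_r; auto. left. apply KB_part.
Qed.

Definition gB (r : nat) : C := alpha q r * delta r.
Definition GB : C := CSer gB.

Lemma gB_bound r : (Cmod (gB r) <= KB * t ^ r)%R.
Proof. replace (gB r) with (gB r - 0) by ring. apply (Clim_le_bound _ _ _ _ (fB_lim r)).
  intros N. replace (fB N r - 0) with (fB N r) by ring. apply fB_bound. Qed.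

Lemma HGB : is_series gB GB.
Proof. apply CSer_spec. apply (ex_series_geom_C _ KB t). apply t_bounds. apply gB_bound. Qed.

Lemma S2_series : is_series S2t GB.
Proof.
  rewrite is_series_cs. apply (dct fB (cs S2t) gB GB KB t). apply t_bounds. apply fB_bound.
  apply fB_series. apply fB_lim. apply HGB.
Qed.

Lemma lim_nz (z : C) P : (forall k, z * Cpow p k <> 1) -> Clim (qpoch z p) P -> P <> 0.
Proof.
  intros Hk HP E. destruct (qp_lb z p Hp Hk) as [e [He Hen]].
  pose proof (Clim_ge_bound _ _ _ HP Hen). rewrite E, Cmod_0 in H. lra.
Qed.

Lemma main_sec :
  exists S1 S2 P1 P2 P3 P4 : C,
    is_series (fun n : nat =>
        (1%R - Cpow q (2 * n + 1))
        * (qpoch (Cpow q 2 / a) (Cpow q 2) n * qpoch (Cpow q 2 / c) (Cpow q 2) n)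
        / (qpoch (Cpow q 2 * a) (Cpow q 2) n * qpoch (Cpow q 2 * c) (Cpow q 2) n)
        * Cpow (a * c) n * inner_sum q n) S1 /\
    is_series (fun n : nat =>
        (qpoch (Cpow q 2 / a) (Cpow q 2) n * qpoch (Cpow q 2 / c) (Cpow q 2) n)
        / ((1%R + Cpow q (2 * n + 1)) * qpoch (Cpow q 4) (Cpow q 4) n)
        * Cpow (Copp (a * c)) n) S2 /\
    is_qpoch_inf (Cpow q 2) (Cpow q 2) P1 /\
    is_qpoch_inf (a * c) (Cpow q 2) P2 /\
    is_qpoch_inf (Cpow q 2 * a) (Cpow q 2) P3 /\
    is_qpoch_inf (Cpow q 2 * c) (Cpow q 2) P4 /\
    S1 = (P1 * P2) / (P3 * P4) * S2.
Proof.
  destruct (qp_conv p p Hp) as [P1 H1]. destruct (qp_conv x p Hp) as [P2 H2].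
  destruct (qp_conv (p * a) p Hp) as [P3 H3]. destruct (qp_conv (p * c) p Hp) as [P4 H4].
  assert (N3 : P3 <> 0) by (apply (lim_nz (p * a)); auto; apply pz_k; auto).
  assert (N4 : P4 <> 0) by (apply (lim_nz (p * c)); auto; apply pz_k; auto).
  assert (N1 : P1 <> 0).
  { intro E. pose proof (Clim_ge_bound _ _ _ H1 (fun n => pp_lb p n Hp)). rewrite E, Cmod_0 in H.
    pose proof (cpc_pos p). lra. }
  assert (Np : 1 - p <> 0) by (apply one_minus_nz; auto).
  pose proof (euler p x Ex P2 Hp Hx HEx H2) as EU.
  pose proof (key_rel P1 P3 P4 H1 H3 H4) as KR.
  assert (NEx : Ex <> 0) by (intro E; rewrite E, Cmult_0_l in EU; apply C1_nz; rewrite <- EU; reflexivity).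
  assert (ND : D 0 <> 0).
  { intro E. rewrite E, Cmult_0_l in KR.
    assert (Ex * P3 * P4 * (1 - p) <> 0) by (repeat apply Cmult_neq_0; auto). auto. }
  exists (((1 - p) / D 0) * GB), GB, P1, P2, P3, P4.
  split; [|split; [|split; [|split; [|split; [|split]]]]].
  - apply is_series_ext_C with (fun r => (1 - p) / D 0 * gB r).
    2: apply is_series_scal_C, HGB.
    intros r. unfold gB, delta, gam, alpha.
    pose proof (D_inv r) as DI.
    assert (Na : qpoch (p * a) p r <> 0) by (apply qp_nz, pz_k; auto).
    assert (Nc : qpoch (p * c) p r <> 0) by (apply qp_nz, pz_k; auto).
    assert (Nr : qpoch p p (S (2 * r)) <> 0) by (apply pp_nz; auto).
    replace (D r) with (D 0 * qpoch p p (S (2 * r)) / (qpoch (p * a) p r * qpoch (p * c) p r * (1 - p))).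
    2:{ rewrite <- DI. field. repeat split; auto. }
    fold p. fold x. fold r1. fold r2. field. repeat split; auto.
  - apply is_series_ext_C with S2t. 2: apply S2_series.
    intros n. unfold S2t. rewrite BP by auto. unfold gam.
    replace (Copp (a * c)) with (m1 * x) by (unfold m1, x; ring). rewrite Cpow_mult_l.
    fold p. fold r1. fold r2. unfold Cdiv. ring.
  - apply Clim_filterlim. auto.
  - apply Clim_filterlim. auto.
  - apply Clim_filterlim. auto.
  - apply Clim_filterlim. auto.
  - assert (E2 : P2 = / Ex).
    { replace P2 with (Ex * P2 / Ex) by (field; auto). rewrite EU. field. auto. }
    assert (E0 : D 0 = Ex * P3 * P4 * (1 - p) / P1) by (rewrite KR; field; auto).
    rewrite E2, E0. field. repeat split; auto.
Qed.
End Main.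


Theorem theorem8p1 (q a c : C) :
  (0 < Cmod q)%R -> (Cmod q < 1)%R ->
  a <> 0%R -> c <> 0%R ->
  (forall k : nat, a * Cpow q (2 * k + 2) <> 1%R) ->
  (forall k : nat, c * Cpow q (2 * k + 2) <> 1%R) ->
  (Cmod (a * c) < 1)%R ->
  exists S1 S2 P1 P2 P3 P4 : C,
    is_series (fun n : nat =>
        (1%R - Cpow q (2 * n + 1))
        * (qpoch (Cpow q 2 / a) (Cpow q 2) n * qpoch (Cpow q 2 / c) (Cpow q 2) n)
        / (qpoch (Cpow q 2 * a) (Cpow q 2) n * qpoch (Cpow q 2 * c) (Cpow q 2) n)
        * Cpow (a * c) n * inner_sum q n) S1 /\
    is_series (fun n : nat =>
        (qpoch (Cpow q 2 / a) (Cpow q 2) n * qpoch (Cpow q 2 / c) (Cpow q 2) n)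
        / ((1%R + Cpow q (2 * n + 1)) * qpoch (Cpow q 4) (Cpow q 4) n)
        * Cpow (Copp (a * c)) n) S2 /\
    is_qpoch_inf (Cpow q 2) (Cpow q 2) P1 /\
    is_qpoch_inf (a * c) (Cpow q 2) P2 /\
    is_qpoch_inf (Cpow q 2 * a) (Cpow q 2) P3 /\
    is_qpoch_inf (Cpow q 2 * c) (Cpow q 2) P4 /\
    S1 = (P1 * P2) / (P3 * P4) * S2.
Proof.
  intros Hq0 Hq1 Ha Hc Hak Hck Hx.
  apply main_sec; assumption.
Qed.
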